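(* The family $\mathcal{P}_{gd}$ of good isomorphisms is cofinal in $\mathcal{P}$ (every $p\in\mathcal{P}$ is extended by some element of $\mathcal{P}_{gd}$). Furthermore, for every $\gamma\in\mathrm{Aut}(\mathbb{Q},<)$ the family $\mathcal{P}_{gd}\cap\mathcal{P}_\gamma$ is cofinal in $\mathcal{P}_\gamma$.
   Context: $\mathcal{P}$ is the set of finite partial isomorphisms of $(\mathbb{Q},<)$, ordered by extension. $\mathrm{Aut}(\mathbb{Q},<)$ carries the topology of pointwise convergence; $\mathcal{C}_\gamma$ is the closure of $\{\sigma\gamma\sigma^{-1}:\sigma\in\mathrm{Aut}(\mathbb{Q},<)\}$ and $\mathcal{P}_\gamma=\{p\in\mathcal{P}: p$ extends to an element of $\mathcal{C}_\gamma\}$. For $a\in\mathrm{Dom}(p)\cup\mathrm{Rng}(p)$, $\wp_p(a)$ is the sign ($+,0,-$) of $p(a)-a$ if $a\in\mathrm{Dom}(p)$, or of $a-p^{-1}(a)$ if $a\in\mathrm{Rng}(p)$. Elements $a,b$ are $p$-related if $a=b$, or if $\wp_p(a)=+$ or $\wp_p(b)=+$ and one of $a\le b\le p(a)$, $b\le a\le p(b)$, $p^{-1}(a)\le b\le a$, $p^{-1}(b)\le a\le b$ holds, or if $\wp_p(a)=-$ or $\wp_p(b)=-$ and one of $a\le b\le p^{-1}(a)$, $b\le a\le p^{-1}(b)$, $p(a)\le b\le a$, $p(b)\le a\le b$ holds (when defined). $\sim_p$ is the generated equivalence; classes meeting $\mathrm{Dom}(p)\cup\mathrm{Rng}(p)$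 are colored $p$-orbitals, with parity $\wp_p$, linearly ordered by $I\prec J$ iff every element of $I$ is below every element of $J$. A bad pair of $p$ is $a<a'$ in $\mathrm{Dom}(p)\cup\mathrm{Rng}(p)$ such that either the colored $p$-orbitals of $a,a'$ and all colored $p$-orbitals between them have parity $+$ and $p(a)$, $p^{-1}(a')$ are undefined, or they all have parity $-$ and $p(a')$, $p^{-1}(a)$ are undefined. $p$ is a good isomorphism ($p\in\mathcal{P}_{gd}$) if no colored $p$-orbital of parity $+$ or $-$ contains a bad pair, and any two colored $p$-orbitals of parities in $\{+,-\}$ which are neighbours in the ordering of colored $p$-orbitals have different parities. *)

(* Defs.v *)
From HB Require Import structures.
From mathcomp Require Import all_boot all_order all_algebra finmap.
From Stdlib Require Import Relation_Operators.
Set Implicit Arguments. Unset Strict Implicit. Unset Printing Implicit Defensive.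
Import Order.TTheory GRing.Theory Num.Theory.
Local Open Scope ring_scope.
Local Open Scope fmap_scope.

Definition qpmap := {fmap rat -> rat}.

Definition pisom (p : qpmap) : Prop :=
  forall a b c d, p.[? a] = Some c -> p.[? b] = Some d -> a < b -> c < d.

Definition extends (q p : qpmap) : Prop :=
  forall a c, p.[? a] = Some c -> q.[? a] = Some c.

Definition pinv (p : qpmap) (a : rat) : option rat :=
  omap val [pick x : domf p | p x == a].

Definition DR (p : qpmap) (a : rat) : Prop :=
  p.[? a] <> None \/ pinv p a <> None.

(* parity of a (1 for +, 0, -1 for -); 0 outside Dom u Rng (never used there) *)
Definition parity (p : qpmap) (a : rat) : rat :=
  match p.[? a] with
  | Some c => Num.sg (c - a)
  | None => match pinv p a with Some c => Num.sg (a - c) | None => 0 end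
  end.

Definition prel (p : qpmap) (a b : rat) : Prop :=
  a = b
  \/ ((parity p a = 1 \/ parity p b = 1) /\
      ((exists c, p.[? a] = Some c /\ a <= b <= c)
       \/ (exists c, p.[? b] = Some c /\ b <= a <= c)
       \/ (exists c, pinv p a = Some c /\ c <= b <= a)
       \/ (exists c, pinv p b = Some c /\ c <= a <= b)))
  \/ ((parity p a = -1 \/ parity p b = -1) /\
      ((exists c, pinv p a = Some c /\ a <= b <= c)
       \/ (exists c, pinv p b = Some c /\ b <= a <= c)
       \/ (exists c, p.[? a] = Some c /\ c <= b <= a)
       \/ (exists c, p.[? b] = Some c /\ c <= a <= b))).

Definition psim (p : qpmap) : rat -> rat -> Prop := clos_refl_sym_trans rat (prel p).

Definition oprec (p : qpmap) (a c : rat) : Prop :=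
  forall x y, psim p x a -> psim p y c -> x < y.

Definition opreceq (p : qpmap) (a c : rat) : Prop := psim p a c \/ oprec p a c.

(* (a, a') is a bad pair of p. The colored orbitals of a, a' and all colored
   orbitals in between are exactly the classes of the c in Dom u Rng with
   class(a) <= class(c) <= class(a'); "all have parity s" means every element
   of Dom u Rng in them has parity s. *)
Definition bad_pair (p : qpmap) (a a' : rat) : Prop :=
  DR p a /\ DR p a' /\ a < a' /\
  ( ((forall c, DR p c -> opreceq p a c -> opreceq p c a' -> parity p c = 1)
      /\ p.[? a] = None /\ pinv p a' = None)
  \/ ((forall c, DR p c -> opreceq p a c -> opreceq p c a' -> parity p c = -1)
      /\ p.[? a'] = None /\ pinv p a = None)).

Definition good (p : qpmap) : Prop :=
  pisom p
  /\ (* no colored orbital of parity + or - contains a bad pair *)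
  (forall a a', DR p a -> psim p a a' -> parity p a <> 0 -> ~ bad_pair p a a')
  /\ (* neighbouring colored orbitals of parities in {+,-} have different parities *)
  (forall a c, DR p a -> DR p c -> oprec p a c ->
     parity p a <> 0 -> parity p c <> 0 ->
     (~ exists d, DR p d /\ oprec p a d /\ oprec p d c) ->
     parity p a <> parity p c).

Definition is_aut (g : rat -> rat) : Prop :=
  bijective g /\ (forall x y, x < y -> g x < g y).

(* h lies in the closure C_gamma (in Aut(Q,<) with the pointwise convergence
   topology) of the conjugacy class of gamma: every basic neighbourhood
   {h' | h' = h on F}, F finite, meets the conjugacy class. *)
Definition in_conj_closure (gamma h : rat -> rat) : Prop :=
  is_aut h /\
  forall F : seq rat, exists sigma tau : rat -> rat,
    is_aut sigma /\ cancel sigma tau /\ cancel tau sigma /\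
    (forall x, x \in F -> sigma (gamma (tau x)) = h x).

Definition in_Pgamma (gamma : rat -> rat) (p : qpmap) : Prop :=
  pisom p /\
  exists h, in_conj_closure gamma h /\ (forall a c, p.[? a] = Some c -> h a = c).

(* Main.v *)
Require Import Defs.
From HB Require Import structures.
From mathcomp Require Import all_boot all_order all_algebra finmap.
From mathcomp Require Import ring lra.
From Stdlib Require Import Relation_Operators Classical.
Set Implicit Arguments. Unset Strict Implicit. Unset Printing Implicit Defensive.
Import Order.TTheory GRing.Theory Num.Theory.
Local Open Scope ring_scope.
Local Open Scope fmap_scope.

Definition E (p : qpmap) a b := p.[? a] = Some b.

Lemma pinvE p a c : pinv p a = Some c -> E p c a.
Proof. rewrite /pinv; case: pickP => //= x /eqP <- [<-]. by rewrite /E -Some_fnd. Qed.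

Lemma pinv_some p a c : E p c a -> pinv p a <> None.
Proof.
rewrite /E /pinv => h; case: pickP => [x _ //|].
have cin : c \in domf p by rewrite -fndSome h.
move=> /(_ [` cin]%fset) /=; rewrite (in_fnd cin) in h; case: h => ->.
by rewrite eqxx.
Qed.

Lemma pisom_inj p a b c : pisom p -> E p a c -> E p b c -> a = b.
Proof.
move=> H Ea Eb; case: (ltgtP a b) => // h.
  by have := H _ _ _ _ Ea Eb h; rewrite ltxx.
by have := H _ _ _ _ Eb Ea h; rewrite ltxx.
Qed.

Lemma E_fun p a b b' : E p a b -> E p a b' -> b = b'.
Proof. by rewrite /E => -> []. Qed.

Lemma pinv_iff p a c : pisom p -> (pinv p a = Some c <-> E p c a).
Proof.
move=> H; split; first exact: pinvE.
move=> Ec; case h: (pinv p a) => [c'|]; last by have := pinv_some Ec; rewrite h.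
by rewrite (pisom_inj H (pinvE h) Ec).
Qed.

Lemma DR_iff p a : DR p a <-> (exists b, E p a b) \/ (exists b, E p b a).
Proof.
rewrite /DR /E; split.
  case=> h; [left|right]; move: h.
    by case: (p.[? a]) => [b _|//]; exists b.
  by case h: (pinv p a) => [b|//] _; exists b; apply: pinvE.
case=> [[b h]|[b h]]; [left|right]; first by rewrite h.
exact: pinv_some h.
Qed.

Lemma DR_dom p a b : E p a b -> DR p a.
Proof. by move=> h; apply/DR_iff; left; exists b. Qed.
Lemma DR_rng p a b : E p a b -> DR p b.
Proof. by move=> h; apply/DR_iff; right; exists a. Qed.

Definition mkf (s : seq (rat * rat)) : qpmap :=
  foldr (fun xy f => f.[xy.1 <- xy.2]) [fmap] s.

Lemma mkf_E s a b : E (mkf s) a b -> (a, b) \in s.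
Proof.
rewrite /E; elim: s => [|[x y] s IH] /=; first by rewrite fnd_fmap0.
rewrite fnd_set /=; case: eqP => [-> [<-]|_ h]; first by rewrite mem_head.
by rewrite in_cons IH ?orbT.
Qed.

Lemma mkf_in s a b : (a, b) \in s -> (forall b', (a, b') \in s -> b' = b) ->
  E (mkf s) a b.
Proof.
rewrite /E; elim: s => [//|[x y] s IH] /=.
rewrite in_cons fnd_set /= => hin hf.
case: eqP => [ex|nx].
  by rewrite -ex in hf *; rewrite (hf y) // mem_head.
case/orP: hin => [/eqP [ax _]|hin]; first by case: nx; rewrite ax.
by apply: IH => // b' hb; apply: hf; rewrite in_cons hb orbT.
Qed.

Definition betw (u v z : rat) := ((u <= z) && (z <= v)) || ((v <= z) && (z <= u)).

Lemma prel_pair p x y : prel p x y -> x = y \/ exists u v, E p u v /\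
  ((((x == u) || (x == v)) && betw u v y) \/ (((y == u) || (y == v)) && betw u v x)).
Proof.
rewrite /prel /betw => H; case: H => [->|[[_ H]|[_ H]]]; first by left.
- right; case: H => [[c [h1 h2]]|[[c [h1 h2]]|[[c [h1 h2]]|[c [h1 h2]]]]].
  + by exists x, c; split => //; left; rewrite eqxx h2.
  + by exists y, c; split => //; right; rewrite eqxx h2.
  + by exists c, x; split; [exact: pinvE|left; rewrite eqxx orbT h2].
  + by exists c, y; split; [exact: pinvE|right; rewrite eqxx orbT h2].
- right; case: H => [[c [h1 h2]]|[[c [h1 h2]]|[[c [h1 h2]]|[c [h1 h2]]]]].
  + by exists c, x; split; [exact: pinvE|left; rewrite eqxx orbT h2 orbT].
  + by exists c, y; split; [exact: pinvE|right; rewrite eqxx orbT h2 orbT].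
  + by exists x, c; split => //; left; rewrite eqxx h2 orbT.
  + by exists y, c; split => //; right; rewrite eqxx h2 orbT.
Qed.

Lemma betw_side w u v z : (w < u) = (w < v) -> betw u v z -> (w < z) = (w < u).
Proof.
rewrite /betw => huv hb.
case: (ltP w u) huv => hu /esym hv.
  apply/idP; case/orP: hb => /andP [h1 h2]; lra.
apply/negbTE; rewrite -leNgt; move/negbT: hv; rewrite -leNgt => hv.
case/orP: hb => /andP [h1 h2]; lra.
Qed.

Lemma psim_cut p w : (forall u v, E p u v -> (w < u) = (w < v)) ->
  forall x y, psim p x y -> (w < x) = (w < y).
Proof.
move=> H x y; elim => {x y} [x y hp| x | x y _ -> | x y z _ -> _ ->] //.
case: (prel_pair hp) => [->//|[u [v [E1 [/andP [hx hb]| /andP [hy hb]]]]]].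
- have Huv := H _ _ E1; rewrite (betw_side Huv hb).
  by case/orP: hx => /eqP ->.
- have Huv := H _ _ E1; rewrite (betw_side Huv hb).
  by case/orP: hy => /eqP ->.
Qed.

Lemma sg_pos (x : rat) : 0 < x -> Num.sg x = 1. Proof. exact: gtr0_sg. Qed.
Lemma sg_neg (x : rat) : x < 0 -> Num.sg x = -1. Proof. exact: ltr0_sg. Qed.

Lemma sign_cons p a b c : pisom p -> E p a c -> E p b a ->
  Num.sg (c - a) = Num.sg (a - b).
Proof.
move=> H Ea Eb; case: (ltgtP a b) => h.
- have := H _ _ _ _ Ea Eb h => h2.
  by rewrite !sg_neg // subr_lt0.
- have := H _ _ _ _ Eb Ea h => h2.
  by rewrite !sg_pos // subr_gt0.
- subst b; have -> := E_fun Ea Eb; by rewrite subrr.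
Qed.

Lemma parity_dom p a b : E p a b -> parity p a = Num.sg (b - a).
Proof. by rewrite /parity /E => ->. Qed.

Lemma parity_rng p a b : pisom p -> E p b a -> parity p a = Num.sg (a - b).
Proof.
move=> H Eb; rewrite /parity; case h: (p.[? a]) => [c|].
  exact: (sign_cons H h Eb).
by have := proj2 (pinv_iff a b H) Eb => ->.
Qed.

Lemma parity_out p a : ~ DR p a -> parity p a = 0.
Proof.
move=> nD; rewrite /parity; case h: (p.[? a]) => [c|].
  by case: nD; left; rewrite h.
case h2: (pinv p a) => [c|] //; by case: nD; right; rewrite h2.
Qed.

Lemma parity_DR p a : parity p a <> 0 -> DR p a.
Proof. move=> h; apply: NNPP => nD; exact: h (parity_out nD). Qed.

Definition agree_on (p p' : qpmap) :=
  forall x, DR p x -> p'.[? x] = p.[? x] /\ pinv p' x = pinv p x.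

Lemma agree_par p p' x : agree_on p p' -> DR p x -> parity p' x = parity p x.
Proof. by move=> A /A [h1 h2]; rewrite /parity h1 h2. Qed.

Lemma agree_par1 p p' x s : agree_on p p' -> s <> 0 -> parity p x = s -> parity p' x = s.
Proof.
move=> A hs h; rewrite (agree_par A) //; apply: parity_DR; by rewrite h.
Qed.

Lemma agree_fnd p p' x c : agree_on p p' -> p.[? x] = Some c -> p'.[? x] = Some c.
Proof. move=> A h; have D : DR p x by left; rewrite h. by have [-> _] := A x D. Qed.

Lemma agree_pinv p p' x c : agree_on p p' -> pinv p x = Some c -> pinv p' x = Some c.
Proof. move=> A h; have D : DR p x by right; rewrite h. by have [_ ->] := A x D. Qed.

Lemma prel_mono p p' x y : agree_on p p' -> prel p x y -> prel p' x y.
Proof.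
move=> A; have o1 : (1 : rat) <> 0 by [].
have o2 : (-1 : rat) <> 0 by [].
case=> [->|[[hp H]|[hp H]]]; [by left| right; left | right; right]; split.
- by case: hp => h; [left|right]; apply: agree_par1 h.
- case: H => [[c [h1 h2]]|[[c [h1 h2]]|[[c [h1 h2]]|[c [h1 h2]]]]].
  + by left; exists c; rewrite (agree_fnd A h1).
  + by right; left; exists c; rewrite (agree_fnd A h1).
  + by right; right; left; exists c; rewrite (agree_pinv A h1).
  + by right; right; right; exists c; rewrite (agree_pinv A h1).
- by case: hp => h; [left|right]; apply: agree_par1 h.
- case: H => [[c [h1 h2]]|[[c [h1 h2]]|[[c [h1 h2]]|[c [h1 h2]]]]].
  + by left; exists c; rewrite (agree_pinv A h1).
  + by right; left; exists c; rewrite (agree_pinv A h1).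
  + by right; right; left; exists c; rewrite (agree_fnd A h1).
  + by right; right; right; exists c; rewrite (agree_fnd A h1).
Qed.

Lemma psim_mono p p' x y : agree_on p p' -> psim p x y -> psim p' x y.
Proof.
move=> A; elim => {x y} [x y h|x|x y _ h|x y z _ h1 _ h2].
- by apply: rst_step; apply: prel_mono h.
- exact: rst_refl.
- exact: rst_sym.
- exact: rst_trans h1 h2.
Qed.

Lemma psim_step p x y : prel p x y -> psim p x y.
Proof. exact: rst_step. Qed.
Lemma psim_sym p x y : psim p x y -> psim p y x.
Proof. exact: rst_sym. Qed.
Lemma psim_trans p x y z : psim p x y -> psim p y z -> psim p x z.
Proof. exact: rst_trans. Qed.
Lemma psim_refl p x : psim p x x.
Proof. exact: rst_refl. Qed.

Lemma prel_up p a b z : E p a b -> a < b -> a <= z <= b -> prel p a z.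
Proof.
move=> Eab ab hz; right; left; split.
  left; rewrite (parity_dom Eab); apply: sg_pos; lra.
by left; exists b.
Qed.

Lemma prel_down p a b z : E p a b -> b < a -> b <= z <= a -> prel p a z.
Proof.
move=> Eab ab hz; right; right; split.
  left; rewrite (parity_dom Eab); apply: sg_neg; lra.
by right; right; left; exists b.
Qed.

Lemma prel_pair_step p a b : E p a b -> prel p a b.
Proof.
move=> Eab; case: (ltgtP a b) => h.
- apply: (prel_up Eab) => //; lra.
- apply: (prel_down Eab) => //; lra.
- by left.
Qed.

Definition pairs (q : qpmap) : seq (rat * rat) := [seq (val k, q k) | k : domf q].

Lemma pairsP q a b : (a, b) \in pairs q <-> E q a b.
Proof.
rewrite /pairs /E; split.
  by case/mapP => k _ [-> ->]; rewrite -Some_fnd.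
move=> h; have ain : a \in domf q by rewrite -fndSome h.
apply/mapP; exists [` ain]%fset; first by rewrite mem_enum.
by rewrite (in_fnd ain) in h; case: h => <-.
Qed.

Definition inv (q : qpmap) : qpmap := mkf [seq (xy.2, xy.1) | xy <- pairs q].

Lemma invE q a b : pisom q -> (E (inv q) a b <-> E q b a).
Proof.
move=> H; split.
  by move/mkf_E/mapP => [[x y] /pairsP h [-> ->]].
move=> h; apply: mkf_in.
  by apply/mapP; exists (b, a) => //; apply/pairsP.
move=> b' /mapP [[x y] /pairsP h2 [ey ex]]; subst.
exact: (pisom_inj H h2 h).
Qed.

Lemma inv_pisom q : pisom q -> pisom (inv q).
Proof.
move=> H a b c d /(invE _ _ H) Ea /(invE _ _ H) Eb ab.
case: (ltgtP c d) => // h.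
- have := H _ _ _ _ Eb Ea h; lra.
- subst d; have := E_fun Ea Eb; lra.
Qed.

Lemma inv_fnd q a : pisom q -> (inv q).[? a] = pinv q a.
Proof.
move=> H; case h: (pinv q a) => [c|].
  by apply/(invE _ _ H); apply/(pinv_iff _ _ H).
case h2: ((inv q).[? a]) => [c|] //.
have := pinv_some (proj1 (invE _ _ H) h2); by rewrite h.
Qed.

Lemma inv_pinv q a : pisom q -> pinv (inv q) a = q.[? a].
Proof.
move=> H; have Hi := inv_pisom H.
case h: (q.[? a]) => [c|].
  by apply/(pinv_iff _ _ Hi); apply/(invE _ _ H).
case h2: (pinv (inv q) a) => [c|] //.
have := proj1 (invE _ _ H) (pinvE h2); rewrite /E h; done.
Qed.

Lemma inv_DR q x : pisom q -> (DR (inv q) x <-> DR q x).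
Proof. move=> H; rewrite /DR inv_fnd // inv_pinv //; tauto. Qed.

Lemma parity_inv q x : pisom q -> parity (inv q) x = - parity q x.
Proof.
move=> H; rewrite /parity inv_fnd // inv_pinv //.
case h1: (q.[? x]) => [c1|]; case h2: (pinv q x) => [c2|].
- have := sign_cons H h1 (pinvE h2) => ->.
  by rewrite -sgrN opprB.
- by rewrite -sgrN opprB.
- by rewrite -sgrN opprB.
- by rewrite oppr0.
Qed.

Lemma prel_inv q x y : pisom q -> prel (inv q) x y -> prel q x y.
Proof.
move=> H; rewrite /prel !parity_inv // !inv_fnd // !inv_pinv //.
have e1 z : - parity q z = 1 -> parity q z = -1.
  by move=> h; rewrite -[parity q z]opprK h.
have e2 z : - parity q z = -1 -> parity q z = 1.
  by move=> h; rewrite -[parity q z]opprK h.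
case=> [->|[[hp H1]|[hp H1]]]; [by left| |].
- right; right; split; [by case: hp => h; [left|right]; apply: e1 | tauto].
- right; left; split; [by case: hp => h; [left|right]; apply: e2 | tauto].
Qed.

Lemma inv_inv_agree q : pisom q -> forall a, (inv (inv q)).[? a] = q.[? a].
Proof.
move=> H a; have Hi := inv_pisom H; rewrite inv_fnd // inv_pinv //.
Qed.

Lemma prel_inv' q x y : pisom q -> prel q x y -> prel (inv q) x y.
Proof.
move=> H h; apply: prel_inv; first exact: inv_pisom.
have -> : inv (inv q) = q by apply/fmapP => a; apply: inv_inv_agree.
done.
Qed.

Lemma psim_inv q x y : pisom q -> (psim (inv q) x y <-> psim q x y).
Proof.
move=> H; split; elim => {x y} [x y h|x|x y _ h|x y z _ h1 _ h2].
- by apply: rst_step; apply: prel_inv h.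
- exact: rst_refl.
- exact: rst_sym.
- exact: rst_trans h1 h2.
- by apply: rst_step; apply: prel_inv' h.
- exact: rst_refl.
- exact: rst_sym.
- exact: rst_trans h1 h2.
Qed.

Lemma blk_lt (blk : rat -> nat) x y :
  (forall x y, x <= y -> (blk x <= blk y)%N) -> (blk x < blk y)%N -> x < y.
Proof.
move=> M h; rewrite ltNge; apply/negP => /M h2.
by move: (leq_ltn_trans h2 h); rewrite ltnn.
Qed.

Lemma good_crit q (blk : rat -> nat) :
  pisom q ->
  (forall x y, x <= y -> (blk x <= blk y)%N) ->
  (forall x y, psim q x y -> blk x = blk y) ->
  (forall x y, DR q x -> DR q y -> blk x = blk y -> psim q x y) ->
  (forall a a', DR q a -> DR q a' -> blk a = blk a' -> parity q a = 1 ->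
     q.[? a] = None -> pinv q a' = None -> a' <= a) ->
  (forall a a', DR q a -> DR q a' -> blk a = blk a' -> parity q a = -1 ->
     q.[? a'] = None -> pinv q a = None -> a' <= a) ->
  (forall x y, DR q x -> DR q y -> (blk x < blk y)%N -> parity q x <> 0 ->
     parity q x = parity q y ->
     exists d, DR q d /\ (blk x < blk d)%N /\ (blk d < blk y)%N) ->
  good q.
Proof.
move=> Hiso M Hinv Hcl Hp Hn Hnb; split => //; split.
- move=> a a' Da Sa nz [_ [Da' [aa' H]]].
  have Ba := Hinv _ _ Sa.
  have oa : opreceq q a a by left; apply: psim_refl.
  have oa' : opreceq q a a' by left.
  have oa'' : opreceq q a' a' by left; apply: psim_refl.
  case: H => [[Hc [h1 h2]]|[Hc [h1 h2]]].
  + have := Hp _ _ Da Da' Ba (Hc _ Da oa oa') h1 h2; lra.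
  + have := Hn _ _ Da Da' Ba (Hc _ Da oa oa') h1 h2; lra.
- move=> a c Da Dc oac nza nzc nod eqp.
  have ac : a < c by apply: oac; apply: psim_refl.
  have le := M _ _ (ltW ac).
  case: (ltngtP (blk a) (blk c)) => hb; last first.
  + have := oac a a (psim_refl _ _) (Hcl _ _ Da Dc hb).
    by rewrite ltxx.
  + by move: (leq_ltn_trans le hb); rewrite ltnn.
  + have [d [Dd [h1 h2]]] := Hnb _ _ Da Dc hb nza eqp.
    apply: nod; exists d; split => //; split => x y hx hy.
    * by apply: (blk_lt M); rewrite (Hinv _ _ hx) (Hinv _ _ hy).
    * by apply: (blk_lt M); rewrite (Hinv _ _ hx) (Hinv _ _ hy).
Qed.

Definition cblk (ws : seq rat) (x : rat) : nat := count (fun w => w < x) ws.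

Lemma cblk_mono ws x y : x <= y -> (cblk ws x <= cblk ws y)%N.
Proof.
move=> xy; rewrite /cblk; apply: sub_count => w /= h; lra.
Qed.

Lemma cblk_psim q ws : (forall w, w \in ws -> forall u v, E q u v -> (w < u) = (w < v)) ->
  forall x y, psim q x y -> cblk ws x = cblk ws y.
Proof.
move=> H x y hs; rewrite /cblk; apply: eq_in_count => w hw /=.
exact: (psim_cut (H w hw) hs).
Qed.

Lemma seq_max (T : eqType) (s : seq T) (f : T -> rat) : s <> [::] ->
  exists x, x \in s /\ forall y, y \in s -> f y <= f x.
Proof.
elim: s => [//|a s IH] _.
case: s IH => [|b s] IH.
  by exists a; split; [rewrite mem_head|move=> y; rewrite inE => /eqP ->].
have [x [hx H]] := IH ltac:(by []).
case: (leP (f a) (f x)) => h.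
  exists x; split; first by rewrite in_cons hx orbT.
  by move=> y; rewrite in_cons => /orP [/eqP ->|/H].
exists a; split; first by rewrite mem_head.
move=> y; rewrite in_cons => /orP [/eqP ->//|/H]; lra.
Qed.

Lemma seq_min (T : eqType) (s : seq T) (f : T -> rat) : s <> [::] ->
  exists x, x \in s /\ forall y, y \in s -> f x <= f y.
Proof.
move=> h; have [x [hx H]] := seq_max (fun y => - f y) h.
by exists x; split => // y /H; lra.
Qed.

Definition incr (f : rat -> rat) := forall x y, x < y -> f x < f y.

Lemma incr_le f x y : incr f -> x <= y -> f x <= f y.
Proof. move=> H; rewrite le_eqVlt => /orP [/eqP ->//|/H]; apply: ltW. Qed.

Lemma incr_lt_iff f x y : incr f -> (f x < f y) = (x < y).
Proof.
move=> H; apply/idP/idP; last exact: H.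
move=> h; rewrite ltNge; apply/negP => /(incr_le H); lra.
Qed.

Lemma incr_le_iff f x y : incr f -> (f x <= f y) = (x <= y).
Proof. by move=> H; rewrite !leNgt incr_lt_iff. Qed.

Lemma incr_inj f x y : incr f -> f x = f y -> x = y.
Proof.
move=> H e; apply/eqP; by rewrite eq_le -(incr_le_iff x y H) -(incr_le_iff y x H) e lexx.
Qed.

Definition bump (al be : option rat) (c d x : rat) : rat :=
  if x <= c then
    (if al is Some a then (if x <= a then x else a + (x - a) * ((d - a) / (c - a)))
     else x + (d - c))
  else
    (if be is Some b then (if b <= x then x else b - (b - x) * ((b - d) / (b - c)))
     else x + (d - c)).

Definition bvalid (al be : option rat) (c d : rat) :=
  (forall a, al = Some a -> a < c /\ a < d) /\ (forall b, be = Some b -> c < b /\ d < b).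

Lemma bvalid_sym al be c d : bvalid al be c d -> bvalid al be d c.
Proof. by case=> h1 h2; split => [a /h1|b /h2] []. Qed.

Lemma bump_lo al be c d x : bvalid al be c d -> x <= c -> bump al be c d x <= d.
Proof.
case=> [h1 h2] xc; rewrite /bump xc.
case: al h1 => [a|] h1; last lra.
have [ac ad] := h1 a erefl.
case: ifP => xa; first lra.
have k0 : 0 < (d - a) / (c - a) by apply: divr_gt0; lra.
have kc : (c - a) * ((d - a) / (c - a)) = d - a by field; lra.
set k := (d - a) / (c - a) in k0 kc *. clearbody k.
have : 0 <= (c - x) * k by apply: mulr_ge0; lra.
lra.
Qed.

Lemma bump_hi al be c d x : bvalid al be c d -> c < x -> d < bump al be c d x.
Proof.
case=> [h1 h2] xc; rewrite /bump ifF; last by apply/negbTE; rewrite -ltNge.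
case: be h2 => [b|] h2; last lra.
have [cb db] := h2 b erefl.
case: ifP => xb; first lra.
have k0 : 0 < (b - d) / (b - c) by apply: divr_gt0; lra.
have kc : (b - c) * ((b - d) / (b - c)) = b - d by field; lra.
set k := (b - d) / (b - c) in k0 kc *. clearbody k.
move/negbT: xb; rewrite -ltNge => xb.
have : 0 < (x - c) * k by apply: mulr_gt0; lra.
lra.
Qed.

Lemma bump_incr al be c d : bvalid al be c d -> incr (bump al be c d).
Proof.
move=> V x y xy.
case: (leP x c) => xc; case: (leP y c) => yc.
- move: (V) => [h1 _]; rewrite /bump xc yc.
  case: al h1 {V} => [a|] h1; last lra.
  have [ac ad] := h1 a erefl.
  have k0 : 0 < (d - a) / (c - a) by apply: divr_gt0; lra.
  set k := (d - a) / (c - a) in k0 *. clearbody k.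
  have f1 : 0 < (y - x) * k by apply: mulr_gt0; lra.
  case: ifP => xa; case: ifP => ya; try lra.
  have : 0 < (y - a) * k by apply: mulr_gt0; move/negbT: ya; rewrite -ltNge; lra.
  lra.
- have := bump_lo V xc; have := bump_hi V yc; lra.
- lra.
- move: (V) => [_ h2]; rewrite /bump ifF; last by apply/negbTE; rewrite -ltNge.
  rewrite ifF; last by apply/negbTE; rewrite -ltNge.
  case: be h2 {V} => [b|] h2; last lra.
  have [cb db] := h2 b erefl.
  have k0 : 0 < (b - d) / (b - c) by apply: divr_gt0; lra.
  set k := (b - d) / (b - c) in k0 *. clearbody k.
  have f1 : 0 < (y - x) * k by apply: mulr_gt0; lra.
  case: ifP => xb; case: ifP => yb; try lra.
  have : 0 < (b - x) * k by apply: mulr_gt0; move/negbT: xb; rewrite -ltNge; lra.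
  lra.
Qed.

Lemma bump_c al be c d : bvalid al be c d -> bump al be c d c = d.
Proof.
case=> [h1 _]; rewrite /bump lexx.
case: al h1 => [a|] h1; last lra.
have [ac ad] := h1 a erefl; rewrite ifF; last by apply/negbTE; rewrite -ltNge.
field; lra.
Qed.

Lemma bump_K al be c d : bvalid al be c d -> cancel (bump al be c d) (bump al be d c).
Proof.
move=> V x; have V' := bvalid_sym V.
case: (leP x c) => xc.
- have yd := bump_lo V xc.
  rewrite {1}/bump yd /= {yd}.
  move: (V) => [h1 _]; rewrite /bump xc /=.
  case: al h1 V V' => [a|] h1 V V'; last lra.
  have [ac ad] := h1 a erefl.
  case: (leP x a) => xa /=; first by rewrite xa.
  have kc : (c - a) * ((d - a) / (c - a)) = d - a by field; lra.
  have k0 : 0 < (d - a) / (c - a) by apply: divr_gt0; lra.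
  rewrite ifF; last first.
    apply/negbTE; rewrite -ltNge.
    have : 0 < (x - a) * ((d - a) / (c - a)) by apply: mulr_gt0; lra.
    lra.
  field; lra.
- have yd := bump_hi V xc.
  rewrite {1}/bump ifF; last by apply/negbTE; rewrite -ltNge.
  clear yd; move: (V) => [_ h2].
  rewrite /bump ifF; last by apply/negbTE; rewrite -ltNge.
  case: be h2 V V' => [b|] h2 V V'; last lra.
  have [cb db] := h2 b erefl.
  case: (leP b x) => xb /=; first by rewrite xb.
  have kc : (b - c) * ((b - d) / (b - c)) = b - d by field; lra.
  have k0 : 0 < (b - d) / (b - c) by apply: divr_gt0; lra.
  rewrite ifF; last first.
    apply/negbTE; rewrite -ltNge.
    have : 0 < (b - x) * ((b - d) / (b - c)) by apply: mulr_gt0; lra.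
    lra.
  field; lra.
Qed.

Lemma bump_fix_lo al be c d a x : bvalid al be c d -> al = Some a -> x <= a ->
  bump al be c d x = x.
Proof.
move=> [h1 _] ea xa; have [ac _] := h1 a ea.
by rewrite /bump ifT ?ea ?xa //; lra.
Qed.

Lemma bump_fix_hi al be c d b x : bvalid al be c d -> be = Some b -> b <= x ->
  bump al be c d x = x.
Proof.
move=> [_ h2] eb xb; have [cb _] := h2 b eb.
by rewrite /bump ifF ?eb ?xb //; apply/negbTE; rewrite -ltNge; lra.
Qed.

Definition ord_pairs (s : seq (rat * rat)) :=
  forall a b a' b', (a, b) \in s -> (a', b') \in s -> (a < a' -> b < b') /\ (a = a' -> b = b').

Lemma extend_aut (s : seq (rat * rat)) : ord_pairs s ->
  exists rho rhoi, cancel rho rhoi /\ cancel rhoi rho /\ incr rho /\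
    forall a b, (a, b) \in s -> rho a = b.
Proof.
elim: s => [|[u v] s IH] H.
  by exists id, id; do !split => //.
have H' : ord_pairs s.
  by move=> a b a' b' h h'; apply: H; rewrite in_cons ?h ?h' orbT.
have [r [ri [K1 [K2 [I Ext]]]]] := IH H'.
have Huv : (u, v) \in (u, v) :: s by rewrite mem_head.
pose L := [seq xy <- s | xy.1 < u].
pose U := [seq xy <- s | u < xy.1].
have [al Hal] : exists al : option rat,
    (forall x y, (x, y) \in L -> exists a, al = Some a /\ y <= a) /\
    (forall a, al = Some a -> exists x y, (x, y) \in L /\ a = y).
  have [e|ne] := eqVneq L [::].
    by exists None; split => // x y; rewrite e in_nil.
  have [[x y] [hx Hx]] := @seq_max _ L (fun xy : rat * rat => xy.2) (ltac:(by apply/eqP)).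
  exists (Some y); split.
    by move=> x' y' h; exists y; split => //; apply: (Hx (x', y')).
  by move=> a [<-]; exists x, y; split.
have [be Hbe] : exists be : option rat,
    (forall x y, (x, y) \in U -> exists b, be = Some b /\ b <= y) /\
    (forall b, be = Some b -> exists x y, (x, y) \in U /\ b = y).
  have [e|ne] := eqVneq U [::].
    by exists None; split => // x y; rewrite e in_nil.
  have [[x y] [hx Hx]] := @seq_min _ U (fun xy : rat * rat => xy.2) (ltac:(by apply/eqP)).
  exists (Some y); split.
    by move=> x' y' h; exists y; split => //; apply: (Hx (x', y')).
  by move=> b [<-]; exists x, y; split.
have V : bvalid al be (r u) v.
  split.
  - move=> a /(proj2 Hal) [x [y [hxy ->]]].
    move: hxy; rewrite mem_filter /= => /andP [xu hs].
    have hs' : (x, y) \in (u, v) :: s by rewrite in_cons hs orbT.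
    split; last exact: (proj1 (H _ _ _ _ hs' Huv) xu).
    by rewrite -(Ext _ _ hs); apply: I.
  - move=> b /(proj2 Hbe) [x [y [hxy ->]]].
    move: hxy; rewrite mem_filter /= => /andP [xu hs].
    have hs' : (x, y) \in (u, v) :: s by rewrite in_cons hs orbT.
    split; last exact: (proj1 (H _ _ _ _ Huv hs') xu).
    by rewrite -(Ext _ _ hs); apply: I.
exists (bump al be (r u) v \o r), (ri \o bump al be v (r u)).
split; first by move=> x /=; rewrite bump_K // K1.
split; first by move=> x /=; rewrite K2 (bump_K (bvalid_sym V)).
split; first by move=> x y xy /=; apply: (bump_incr V); apply: I.
move=> a b; rewrite in_cons => /orP [/eqP [-> ->]|hs] /=.
  exact: bump_c.
rewrite (Ext _ _ hs).
have hs' : (a, b) \in (u, v) :: s by rewrite in_cons hs orbT.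
case: (ltgtP a u) => au.
- have : (a, b) \in L by rewrite mem_filter /= au hs.
  move=> /(proj1 Hal) [x [ex bx]]; exact: bump_fix_lo V ex bx.
- have : (a, b) \in U by rewrite mem_filter /= au hs.
  move=> /(proj1 Hbe) [x [ex bx]]; exact: bump_fix_hi V ex bx.
- subst a; have e := proj2 (H _ _ _ _ hs' Huv) erefl; subst b.
  by rewrite -{2}(Ext _ _ hs) bump_c.
Qed.

Definition dr (s : seq (rat * rat)) x := (exists b, (x, b) \in s) \/ (exists a, (a, x) \in s).

Definition drs (s : seq (rat * rat)) := [seq xy.1 | xy <- s] ++ [seq xy.2 | xy <- s].

Lemma drsP s x : (x \in drs s) <-> dr s x.
Proof.
rewrite /drs mem_cat; split.
  case/orP => /mapP [[a b] h /= ->]; [left; exists b|right; exists a]; done.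
case=> [[b h]|[a h]]; apply/orP; [left|right]; apply/mapP; by [exists (x, b)|exists (a, x)].
Qed.

Definition convex (O : rat -> Prop) := forall x y z, O x -> O z -> x <= y <= z -> O y.

Lemma gap (O : rat -> Prop) (lo hi : seq rat) o :
  convex O -> O o ->
  (forall x, O x -> exists z, O z /\ z < x) -> (forall x, O x -> exists z, O z /\ x < z) ->
  (forall x, x \in lo -> O x) -> (forall x, x \in hi -> O x) ->
  (forall x y, x \in lo -> y \in hi -> x < y) ->
  exists y, O y /\ (forall x, x \in lo -> x < y) /\ (forall x, x \in hi -> y < x).
Proof.
move=> C Oo Dn Up Olo Ohi Hlh.
have [el|nl] := eqVneq lo [::]; have [eh|nh] := eqVneq hi [::].
- by exists o; split => //; rewrite el eh; split.
- have [m [hm Hm]] := @seq_min _ hi id (ltac:(by apply/eqP)).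
  have [z [Oz zm]] := Dn _ (Ohi _ hm).
  exists z; split => //; rewrite el; split => // x /Hm /=; lra.
- have [m [hm Hm]] := @seq_max _ lo id (ltac:(by apply/eqP)).
  have [z [Oz zm]] := Up _ (Olo _ hm).
  exists z; split => //; rewrite eh; split => // x /Hm /=; lra.
- have [m [hm Hm]] := @seq_max _ lo id (ltac:(by apply/eqP)).
  have [m' [hm' Hm']] := @seq_min _ hi id (ltac:(by apply/eqP)).
  have mm := Hlh _ _ hm hm'.
  exists ((m + m') / 2); split.
    apply: (C m _ m'); [exact: Olo|exact: Ohi|]; apply/andP; split; lra.
  split => x hx; [have := Hm _ hx|have := Hm' _ hx] => /=; lra.
Qed.

Lemma realize (g gi : rat -> rat) (O : rat -> Prop) o :
  cancel g gi -> cancel gi g -> incr g -> convex O ->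
  (forall x, O x -> O (g x)) -> (forall x, O x -> O (gi x)) ->
  (forall x, O x -> x < g x) -> O o ->
  forall s : seq (rat * rat), ord_pairs s -> (forall a b, (a, b) \in s -> a < b) ->
  exists pi : rat -> rat,
    (forall x y, dr s x -> dr s y -> x < y -> pi x < pi y) /\
    (forall x, dr s x -> O (pi x)) /\
    (forall a b, (a, b) \in s -> pi b = g (pi a)).
Proof.
move=> K1 K2 Ig C Og Ogi Opos Oo s.
have Dn : forall x, O x -> exists z, O z /\ z < x.
  move=> x Ox; exists (gi x); split; first exact: Ogi.
  by have := Opos _ (Ogi _ Ox); rewrite K2.
have Up : forall x, O x -> exists z, O z /\ x < z.
  by move=> x Ox; exists (g x); split; [apply: Og|apply: Opos].
have [n] := ubnP (size s); elim: n s => // n IH s hsn Hs Hpos.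
have [es|ns] := eqVneq s [::].
  subst s; exists id; split; [move=> x y [[? //]|[? //]] | split; [move=> x [[? //]|[? //]] | move=> a b //]].
have [[u m] [hum Hum]] := @seq_max _ s (fun xy : rat * rat => xy.2) (ltac:(by apply/eqP)).
simpl in Hum.
pose s' := [seq xy <- s | xy.1 != u].
have ss' : forall a b, (a, b) \in s' -> (a, b) \in s.
  by move=> a b; rewrite mem_filter => /andP [].
have hs'n : (size s' < n)%N.
  rewrite -ltnS; apply: leq_trans hsn; rewrite ltnS /s' size_filter.
  rewrite -(count_predC (fun xy : rat * rat => xy.1 != u) s).
  rewrite -[X in (X < _)%N]addn0 ltn_add2l -has_count.
  by apply/hasP; exists (u, m) => //=; rewrite eqxx.
have Hs' : ord_pairs s'.
  by move=> a b a' b' /ss' h /ss' h'; apply: Hs.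
have [pi' [P1 [P2 P3]]] := IH s' hs'n Hs' (fun a b h => Hpos a b (ss' _ _ h)).
have fun_u : forall b, (u, b) \in s -> b = m.
  by move=> b h; apply: (proj2 (Hs _ _ _ _ h hum)).
have F1 : forall x b, (x, b) \in s' -> x < u.
  move=> x b h; have := ss' _ _ h; move: h; rewrite mem_filter /= => /andP [xu _] h.
  case: (ltgtP x u) => // h2; last by rewrite h2 eqxx in xu.
  have := proj1 (Hs _ _ _ _ hum h) h2; have := Hum _ h; simpl; lra.
have F2 : forall x, dr s' x -> x <> m.
  move=> x [[b h]|[a h]] ex; subst x.
    have := Hpos _ _ (ss' _ _ h); have := Hum _ (ss' _ _ h); simpl; lra.
  have := F1 _ _ h => au.
  have := proj1 (Hs _ _ _ _ (ss' _ _ h) hum) au; lra.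
have um : u < m by apply: Hpos.
have [y [Oy [Hyu Hy]]] : exists y, O y /\ (dr s' u -> y = pi' u) /\
    forall x, dr s' x -> (x < u -> pi' x < y) /\ (u < x -> y < pi' x).
  case: (classic (dr s' u)) => du.
    exists (pi' u); split; first exact: P2.
    by split => // x dx; split => h; apply: P1.
  have [y [Oy [H1 H2]]] := gap (lo := [seq pi' x | x <- drs s' & x < u])
     (hi := [seq pi' x | x <- drs s' & u < x]) C Oo Dn Up
     ltac:(by move=> z /mapP [x]; rewrite mem_filter => /andP [_ /drsP] /P2 ? ->)
     ltac:(by move=> z /mapP [x]; rewrite mem_filter => /andP [_ /drsP] /P2 ? ->)
     ltac:(move=> z z' /mapP [x]; rewrite mem_filter => /andP [h1 /drsP h2] ->;
           move=> /mapP [x']; rewrite mem_filter => /andP [h1' /drsP h2'] ->;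
           apply: P1 => //; lra).
  exists y; split => //; split => // x dx; split => h.
    by apply: H1; apply/mapP; exists x => //; rewrite mem_filter h; apply/drsP.
  by apply: H2; apply/mapP; exists x => //; rewrite mem_filter h; apply/drsP.
have He : forall x, dr s' x -> pi' x < g y.
  move=> x [[b h]|[a h]].
    have xu := F1 _ _ h.
    have := (Hy x (or_introl (ex_intro _ b h))).1 xu; have := Opos _ Oy; lra.
  rewrite (P3 _ _ h); apply: Ig; apply: (Hy a (or_introl (ex_intro _ x h))).1.
  exact: F1 h.
pose pi x := if x == m then g y else if x == u then y else pi' x.
have Epi : forall x, dr s' x -> pi x = pi' x.
  move=> x dx; rewrite /pi ifF; last by apply/eqP; apply: F2.
  case: eqP => // ex; subst x; exact: Hyu.
have Epi' : forall x, dr s' x -> pi x = pi' x := Epi.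
have Eu : pi u = y by rewrite /pi ifF ?eqxx //; apply/eqP; lra.
have Em : pi m = g y by rewrite /pi eqxx.
have Ds : forall x, dr s x -> x <> u -> x <> m -> dr s' x.
  move=> x [[b h]|[a h]] xu xm; [left; exists b|right; exists a];
    rewrite mem_filter h andbT /=; apply/eqP => // au; subst a.
  by apply: xm; apply: fun_u.
have Dm : forall x, dr s x -> x <= m.
  move=> x [[b h]|[a h]]; [have := Hpos _ _ h; have := Hum _ h|have := Hum _ h]; simpl; lra.
exists pi; split; last split.
- move=> x z dx dz xz.
  case: (eqVneq z m) => [ez|nzm].
    subst z; rewrite Em.
    case: (eqVneq x u) => [->|nxu]; first by rewrite Eu; apply: Opos.
    have nxm : x <> m by move=> e; subst x; lra.
    by rewrite Epi; [apply: He|]; apply: Ds => //; apply/eqP.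
  have nxm : x <> m by move=> e; subst x; have := Dm _ dz; lra.
  case: (eqVneq x u) => [ex|nxu]; case: (eqVneq z u) => [ez|nzu].
  + rewrite ex ez in xz; lra.
  + subst x; rewrite Eu Epi; last by apply: Ds => //; apply/eqP.
    by apply: (Hy z _).2 => //; apply: Ds => //; apply/eqP.
  + subst z; rewrite Eu Epi; last by apply: Ds => //; apply/eqP.
    by apply: (Hy x _).1 => //; apply: Ds => //; apply/eqP.
  + have dx' : dr s' x by apply: Ds => //; apply/eqP.
    have dz' : dr s' z by apply: Ds => //; apply/eqP.
    by rewrite !Epi //; apply: P1.
- move=> x dx; rewrite /pi; case: eqP => hm; first exact: Og.
  case: eqP => hu; first done.
  by apply: P2; apply: Ds.
- move=> a b h.
  case: (eqVneq a u) => [ea|nau].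
    subst a; rewrite (fun_u _ h) Em Eu //.
  have h' : (a, b) \in s' by rewrite mem_filter h nau.
  rewrite !Epi //; [exact: P3|left; by exists b|right; by exists a].
Qed.

Lemma betwP u v z : betw u v z <-> (u <= z /\ z <= v) \/ (v <= z /\ z <= u).
Proof.
rewrite /betw; split.
  by case/orP => /andP [h1 h2]; [left|right].
by move=> [[h1 h2]|[h1 h2]]; apply/orP; [left|right]; apply/andP.
Qed.

Lemma betw_split x y z t : betw x z t -> betw x y t \/ betw y z t.
Proof.
rewrite !betwP => h.
case: (leP x y) => h1; case: (leP y t) => h2; case: (leP t y) => h3.
all: try (left; lra).
all: try (right; lra).
all: lra.
Qed.

Definition sgc (c : rat -> rat) x := Num.sg (c x - x).

Lemma sgc_cases c x : (x < c x /\ sgc c x = 1) \/ (c x < x /\ sgc c x = -1) \/ (c x = x /\ sgc c x = 0).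
Proof.
rewrite /sgc; case: (ltgtP x (c x)) => h.
- by left; split => //; apply: gtr0_sg; rewrite subr_gt0.
- by right; left; split => //; apply: ltr0_sg; rewrite subr_lt0.
- by right; right; split => //; rewrite -h subrr sgr0.
Qed.

Lemma sgc_c c x : incr c -> sgc c (c x) = sgc c x.
Proof.
move=> I; case: (sgc_cases c x) => [[h ->]|[[h ->]|[h ->]]].
- by apply: gtr0_sg; rewrite subr_gt0; apply: I.
- by apply: ltr0_sg; rewrite subr_lt0; apply: I.
- by rewrite h /sgc h subrr sgr0.
Qed.

Lemma sgc_inv c ci x : cancel c ci -> cancel ci c -> incr c -> sgc ci x = - sgc c x.
Proof.
move=> K1 K2 I; case: (sgc_cases c x) => [[h ->]|[[h ->]|[h ->]]].
- apply: ltr0_sg; rewrite subr_lt0; rewrite -(incr_lt_iff _ _ I) K2 //.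
- apply: gtr0_sg; rewrite subr_gt0; rewrite -(incr_lt_iff _ _ I) K2 //.
- by rewrite oppr0 /sgc -{1}h K1 subrr sgr0.
Qed.

Lemma between_sign c a z : incr c -> betw a (c a) z -> sgc c z = sgc c a.
Proof.
move=> I; rewrite betwP => hz.
case: (sgc_cases c a) => [[h ->]|[[h ->]|[h ->]]].
- have [e|ne] := eqVneq z a; first by rewrite e; case: (sgc_cases c a) => [[_ ->]|[[? _]|[? _]]] //; lra.
  apply: gtr0_sg; rewrite subr_gt0; rewrite ltNge; apply/negP => hc.
  have az : a < z by move/eqP: ne; lra.
  have := I _ _ az; lra.
- have [e|ne] := eqVneq z a; first by rewrite e; case: (sgc_cases c a) => [[? _]|[[_ ->]|[? _]]] //; lra.
  apply: ltr0_sg; rewrite subr_lt0; rewrite ltNge; apply/negP => hc.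
  have az : z < a by move/eqP: ne; lra.
  have := I _ _ az; lra.
- have -> : z = a by lra.
  by rewrite /sgc h subrr sgr0.
Qed.

Definition Reg (c : rat -> rat) f z := forall t, betw f z t -> sgc c t = sgc c f.

Lemma Reg_refl c f : Reg c f f.
Proof. by move=> t /betwP h; have -> : t = f by lra. Qed.

Lemma Reg_sg c f z : Reg c f z -> sgc c z = sgc c f.
Proof. by move=> H; apply: H; rewrite betwP; lra. Qed.

Lemma Reg_conv c f : convex (Reg c f).
Proof.
move=> x y z Rx Rz hy t /betwP ht.
case: (leP f y) => h.
- case: (leP f z) => h2.
    apply: Rz; rewrite betwP; lra.
  apply: Rx; rewrite betwP; lra.
- case: (leP x f) => h2.
    apply: Rx; rewrite betwP; lra.
  apply: Rz; rewrite betwP; lra.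
Qed.

Lemma Reg_c c f z : incr c -> Reg c f z -> Reg c f (c z).
Proof.
move=> I R t /(betw_split z) [h|h]; first exact: R.
by rewrite (between_sign I h); apply: Reg_sg.
Qed.

Lemma Reg_ci c ci f z : cancel c ci -> cancel ci c -> incr c -> Reg c f z -> Reg c f (ci z).
Proof.
move=> K1 K2 I R t /(betw_split z) [h|h]; first exact: R.
have h' : betw (ci z) (c (ci z)) t by rewrite K2; move: h; rewrite !betwP; lra.
rewrite (between_sign I h') -(sgc_c _ I) K2; exact: Reg_sg.
Qed.

Lemma Reg_inv c ci f z : cancel c ci -> cancel ci c -> incr c -> Reg ci f z -> Reg c f z.
Proof.
move=> K1 K2 I R t /R; rewrite !(sgc_inv _ K1 K2 I) => h.
by rewrite -[sgc c t]opprK h opprK.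
Qed.

Lemma Reg_pos c f z : sgc c f = 1 -> Reg c f z -> z < c z.
Proof.
move=> s1 /Reg_sg; rewrite s1; case: (sgc_cases c z) => [[h _]|[[_ ->]|[_ ->]]] //.
Qed.

Lemma ord_pairs_strict (s : seq (rat * rat)) :
  (forall a b a' b', (a, b) \in s -> (a', b') \in s -> a < a' -> b < b') ->
  (forall a b a' b', (a, b) \in s -> (a', b') \in s -> b < b' -> a < a') ->
  ord_pairs s.
Proof.
move=> H1 H2 a b a' b' h h'; split; first exact: H1.
move=> e; subst a'; case: (ltgtP b b') => // hb.
- by have := H2 _ _ _ _ h h' hb; rewrite ltxx.
- by have := H2 _ _ _ _ h' h hb; rewrite ltxx.
Qed.

Lemma mkf_img (X : seq rat) (r h : rat -> rat) a b : incr r ->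
  E (mkf [seq (r x, r (h x)) | x <- X]) a b <-> exists x, x \in X /\ a = r x /\ b = r (h x).
Proof.
move=> I; split.
  by move/mkf_E/mapP => [x hx [-> ->]]; exists x.
move=> [x [hx [-> ->]]]; apply: mkf_in; first by apply/mapP; exists x.
by move=> b' /mapP [x' _ [/(incr_inj I) -> ->]].
Qed.

Lemma count_lt (T : eqType) (a1 a2 : pred T) (s : seq T) x :
  subpred a1 a2 -> x \in s -> a2 x -> ~~ a1 x -> (count a1 s < count a2 s)%N.
Proof.
move=> sub; elim: s => [//|y s IH]; rewrite in_cons => /orP [/eqP <-|hs] h2 h1 /=.
  rewrite h2 (negPf h1) add1n add0n ltnS; exact: sub_count.
have := IH hs h2 h1; case e: (a1 y); first by rewrite (sub _ e) !add1n ltnS.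
move=> h; rewrite add0n; apply: leq_trans h _; exact: leq_addl.
Qed.

Lemma DR_mkf_img (X : seq rat) (r h : rat -> rat) z : incr r ->
  DR (mkf [seq (r x, r (h x)) | x <- X]) z <-> exists x, x \in X /\ (z = r x \/ z = r (h x)).
Proof.
move=> I; rewrite DR_iff; split.
  case=> [[b /(mkf_img _ _ _ _ I) [x [hx [-> _]]]]|[b /(mkf_img _ _ _ _ I) [x [hx [_ ->]]]]];
    exists x; tauto.
move=> [x [hx [->|->]]]; [left; exists (r (h x))|right; exists (r x)];
  apply/(mkf_img _ _ _ _ I); exists x; tauto.
Qed.

Lemma block_pos c ci (s : seq (rat * rat)) m1 m2 f :
  cancel c ci -> cancel ci c -> incr c ->
  ord_pairs s -> (forall a b, (a, b) \in s -> c a = b) -> (forall a b, (a, b) \in s -> a < b) ->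
  dr s f -> sgc c f = 1 ->
  (forall x, dr s x -> m1 < x /\ x < m2) ->
  exists q : qpmap, pisom q /\ (forall a b, (a, b) \in s -> E q a b) /\
    (forall x, DR q x -> m1 < x /\ x < m2) /\
    (forall x y, DR q x -> DR q y -> psim q x y) /\
    (forall a b, E q a b -> a < b) /\
    (forall a a', DR q a -> DR q a' -> q.[? a] = None -> pinv q a' = None -> a' < a) /\
    exists pi, (forall x y, DR q x -> DR q y -> x < y -> pi x < pi y) /\
      (forall x, DR q x -> Reg c f (pi x)) /\ (forall a b, E q a b -> pi b = c (pi a)).
Proof.
move=> K1 K2 I Hs Hc Hpos df sf Hm.
have [phi [Ph1 [_ Ph3]]] := @realize (fun x => x + 1) (fun x => x - 1) (fun _ => True) 0
  ltac:(move=> x /=; lra) ltac:(move=> x /=; lra) ltac:(move=> x y /=; lra)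
  ltac:(by []) ltac:(by []) ltac:(by []) ltac:(move=> x _ /=; lra) ltac:(by []) s Hs Hpos.
pose D := drs s.
have DP : forall x, x \in D <-> dr s x by move=> x; apply: drsP.
have Dne : D <> [::] by move=> e; have := proj2 (DP f) df; rewrite e.
have [dA [hdA HA]] := @seq_min _ D phi Dne.
have [dB [hdB HB]] := @seq_max _ D phi Dne.
have [lo [hlo Hlo]] := @seq_min _ D id Dne.
have [hi [hhi Hhi]] := @seq_max _ D id Dne.
set A := phi dA in HA *; set B := phi dB in HB *.
simpl in Hlo, Hhi.
have AB : A <= B by apply: HA.
have phim : forall d d', d \in D -> d' \in D -> (phi d < phi d') = (d < d').
  move=> d d' /DP hd /DP hd'; apply/idP/idP; last exact: Ph1.
  move=> h; rewrite ltNge; apply/negP; rewrite le_eqVlt => /orP [/eqP e|h2].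
    by move: h; rewrite e ltxx.
  by have := Ph1 _ _ hd' hd h2; lra.
pose N := Num.Def.archi_bound (B - A + 2).
have hN : B - A + 2 < N%:R by apply: archi_boundP; lra.
pose ks := [seq (i%:R - N%:R : rat) | i <- iota 0 (2 * N).+1].
pose X := [seq x <- [seq phi d + k | d <- D, k <- ks] | (A - 1 <= x) && (x <= B)].
have memX : forall x, x \in X <-> (A - 1 <= x /\ x <= B) /\
    exists d i, d \in D /\ (i <= 2 * N)%N /\ x = phi d + i%:R - N%:R.
  move=> x; rewrite mem_filter; split.
    case/andP => /andP [h1 h2] /allpairsP [[d k] [/= hd hk ex]].
    split; first by split.
    rewrite ex.
    move/mapP: hk => [i]; rewrite mem_iota add0n ltnS => hii ek.
    by exists d, i; rewrite ek addrA.
  move=> [[h1 h2] [d [i [hd [hii ex]]]]]; rewrite h1 h2 !andTb ex.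
  apply/allpairsP; exists (d, i%:R - N%:R) => /=; split => //; last by rewrite addrA.
  by apply/mapP; exists i => //; rewrite mem_iota add0n ltnS.
have XA : forall x, x \in X -> A - 1 <= x /\ x <= B by move=> x /memX [].
have X1 : forall x, x \in X -> x + 1 <= B -> x + 1 \in X.
  move=> x /memX [[h1 h2] [d [i [hd [hii ex]]]]] hb.
  have pd := HA _ hd; have pd' := HB _ hd.
  apply/memX; split; first lra.
  have hi' : (i < 2 * N)%N.
    rewrite ltn_neqAle hii andbT; apply/negP => /eqP ei.
    rewrite ei natrM in ex; have : phi d + 2%:R * N%:R - N%:R <= B by lra.
    lra.
  exists d, i.+1; split => //; split => //; rewrite ex -addn1 natrD; lra.
have X2 : forall x, x \in X -> A <= x -> x - 1 \in X.
  move=> x /memX [[h1 h2] [d [i [hd [hii ex]]]]] ha.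
  have pd := HA _ hd; have pd' := HB _ hd.
  apply/memX; split; first lra.
  case: i hii ex => [|j] hii ex.
    rewrite ex /= in ha; lra.
  exists d, j; split => //; split; first by apply: leq_trans hii; apply: leqnSn.
  rewrite ex -addn1 natrD; lra.
have X3 : forall d, d \in D -> phi d \in X.
  move=> d hd; have pd := HA _ hd; have pd' := HB _ hd.
  apply/memX; split; first lra.
  exists d, N; split => //; split; last lra.
  by rewrite mulSn leq_addr.
have X4 : A - 1 \in X.
  apply/memX; split; first lra.
  have N1 : (0 < N)%N by rewrite -(ltr_nat rat); lra.
  exists dA, N.-1; split => //; split.
    by apply: leq_trans (leq_pred N) _; rewrite mulSn leq_addr.
  have : (N.-1).+1 = N by rewrite prednK.
  move=> e; rewrite -[X in _ - X%:R]e -addn1 natrD; rewrite /A; lra.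
pose lo' := (m1 + lo) / 2.
pose hi' := (hi + m2) / 2.
have [m1lo _] := Hm _ (proj1 (DP lo) hlo).
have [_ him2] := Hm _ (proj1 (DP hi) hhi).
have lohi : lo <= hi := Hlo _ hhi.
pose T := [seq (phi d, d) | d <- D] ++ [:: (A - 1, lo'); (B + 1, hi')].
have memT : forall a b, (a, b) \in T ->
    (exists d, d \in D /\ a = phi d /\ b = d) \/ (a = A - 1 /\ b = lo') \/ (a = B + 1 /\ b = hi').
  move=> a b; rewrite mem_cat => /orP [/mapP [d hd [-> ->]]|]; first by left; exists d.
  by rewrite !inE => /orP [/eqP [-> ->]|/eqP [-> ->]]; right; [left|right].
have HT1 : forall a b a' b', (a, b) \in T -> (a', b') \in T -> a < a' -> b < b'.
  move=> a b a' b' /memT h /memT h'; case: h => [[d [hd [-> ->]]]|[[-> ->]|[-> ->]]];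
    case: h' => [[d' [hd' [-> ->]]]|[[-> ->]|[-> ->]]] => ab;
    rewrite /lo' /hi' in ab *;
    try (have f1 := HA _ hd); try (have f2 := HB _ hd); try (have f3 := Hlo _ hd); try (have f4 := Hhi _ hd);
    try (have f5 := HA _ hd'); try (have f6 := HB _ hd'); try (have f7 := Hlo _ hd'); try (have f8 := Hhi _ hd');
    try lra.
  by rewrite -(phim _ _ hd hd').
have HT2 : forall a b a' b', (a, b) \in T -> (a', b') \in T -> b < b' -> a < a'.
  move=> a b a' b' /memT h /memT h'; case: h => [[d [hd [-> ->]]]|[[-> ->]|[-> ->]]];
    case: h' => [[d' [hd' [-> ->]]]|[[-> ->]|[-> ->]]] => ab;
    rewrite /lo' /hi' in ab *;
    try (have f1 := HA _ hd); try (have f2 := HB _ hd); try (have f3 := Hlo _ hd); try (have f4 := Hhi _ hd);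
    try (have f5 := HA _ hd'); try (have f6 := HB _ hd'); try (have f7 := Hlo _ hd'); try (have f8 := Hhi _ hd');
    try lra.
  by rewrite (phim _ _ hd hd').
have HT : ord_pairs T by apply: ord_pairs_strict.
have [rho [rhoi [R1 [R2 [RI RE]]]]] := extend_aut HT.
have Rphi : forall d, d \in D -> rho (phi d) = d.
  by move=> d hd; apply: RE; rewrite mem_cat; apply/orP; left; apply/mapP; exists d.
have RA : rho (A - 1) = lo' by apply: RE; rewrite mem_cat !inE eqxx orbT.
have RB : rho (B + 1) = hi' by apply: RE; rewrite mem_cat !inE eqxx !orbT.
pose q := mkf [seq (rho x, rho (x + 1)) | x <- X].
have Eq : forall a b, E q a b <-> exists x, x \in X /\ a = rho x /\ b = rho (x + 1).
  by move=> a b; apply: mkf_img.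
have DRq : forall z, DR q z <-> exists x, x \in X /\ (z = rho x \/ z = rho (x + 1)).
  by move=> z; apply: DR_mkf_img.
have Hq5 : forall a b, E q a b -> a < b.
  by move=> a b /Eq [x [_ [-> ->]]]; apply: RI; lra.
have Hiso : pisom q.
  move=> a b a' b' /Eq [x [_ [-> ->]]] /Eq [x' [_ [-> ->]]].
  by rewrite (incr_lt_iff _ _ RI) => h; apply: RI; lra.
exists q; split => //; split.
  move=> a b h; apply/Eq; exists (phi a); split.
    by apply: X3; apply/DP; left; exists b.
  rewrite Rphi; last by apply/DP; left; exists b.
  by rewrite -(Ph3 _ _ h) Rphi //; apply/DP; right; exists a.
split.
  move=> z /DRq [x [hx hz]]; have [h1 h2] := XA _ hx.
  have : rho (A - 1) <= z /\ z <= rho (B + 1).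
    by case: hz => ->; split; apply: (incr_le RI); lra.
  rewrite RA RB /lo' /hi'; lra.
split.
  have base : forall x, x \in X -> psim q (rho x) (rho (A - 1)).
    move=> x; have [n] := ubnP (count (fun t => t < x) X).
    elim: n x => // n IH x hn hx.
    have [ex|nex] := eqVneq x (A - 1); first by rewrite ex; apply: psim_refl.
    have xA : A - 1 < x by have := XA _ hx; move/eqP: nex; lra.
    have Lne : [seq t <- X | t < x] <> [::].
      move=> e; have : A - 1 \in [seq t <- X | t < x] by rewrite mem_filter xA X4.
      by rewrite e.
    have [z [hz Hz]] := @seq_max _ _ id Lne.
    move: hz; rewrite mem_filter => /andP [zx zX]; simpl in Hz.
    have xz : x <= z + 1.
      case: (leP (z + 1) B) => hb; last by have := XA _ hx; lra.
      rewrite leNgt; apply/negP => h.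
      have := Hz (z + 1); rewrite mem_filter h X1 //=; lra.
    apply: psim_trans (IH z _ zX).
      apply: psim_sym; apply: psim_step; apply: (@prel_up _ _ (rho (z + 1))).
      - by apply/Eq; exists z.
      - by apply: RI; lra.
      - by rewrite !(incr_le_iff _ _ RI) xz ltW.
    have hlt : (count (fun t : rat => (t < z)%R) X < count (fun t : rat => (t < x)%R) X)%N.
      apply: (@count_lt _ (fun t : rat => t < z) (fun t : rat => t < x) X z) => //=.
      + by move=> t /= h; lra.
      + by rewrite ltxx.
    rewrite ltnS in hn; exact: leq_trans hlt hn.
  have all_base : forall z, DR q z -> psim q z (rho (A - 1)).
    move=> z /DRq [x [hx [->|->]]]; first exact: base.
    apply: psim_trans (base _ hx); apply: psim_sym; apply: psim_step.
    by apply: prel_pair_step; apply/Eq; exists x.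
  by move=> x y /all_base hx /all_base hy; apply: psim_trans hx (psim_sym hy).
split => //.
split.
  move=> a a' /DRq [x [hx ha]] /DRq [x' [hx' ha']] na na'.
  have ha2 : a = rho (x + 1) /\ B < x + 1.
    case: ha => ha.
      by move: na; rewrite ha; have -> : q.[? rho x] = Some (rho (x + 1)) by apply/Eq; exists x.
    split => //; rewrite ltNge; apply/negP => hb.
    have := X1 _ hx hb => hx1; move: na; rewrite ha.
    by have -> : q.[? rho (x + 1)] = Some (rho (x + 1 + 1)) by apply/Eq; exists (x + 1).
  have ha2' : a' = rho x' /\ x' < A.
    case: ha' => ha'; last first.
      have := pinv_some (proj2 (Eq (rho x') a') (ex_intro _ x' (conj hx' (conj erefl ha')))).
      by rewrite na'.
    split => //; rewrite ltNge; apply/negP => hA.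
    have := X2 _ hx' hA => hx1.
    have : E q (rho (x' - 1)) a' by apply/Eq; exists (x' - 1); rewrite ha' addrNK.
    by move/pinv_some; rewrite na'.
  case: ha2 ha2' => [-> h1] [-> h2]; apply: RI; have := XA _ hx'; lra.
pose M := [seq (x, x + 1) | x <- X].
have HM : ord_pairs M.
  move=> a b a' b' /mapP [x _ [-> ->]] /mapP [x' _ [-> ->]]; split; [lra|move=> ->; done].
have [piM [PM1 [PM2 PM3]]] := @realize c ci (Reg c f) f K1 K2 I (@Reg_conv c f)
  (fun z => @Reg_c c f z I) (fun z => @Reg_ci c ci f z K1 K2 I) (fun z => @Reg_pos c f z sf)
  (@Reg_refl c f) M HM ltac:(by move=> a b /mapP [x _ [-> ->]]; lra).
have drM : forall z, DR q z -> dr M (rhoi z).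
  move=> z /DRq [x [hx [->|->]]]; rewrite R1; [left; exists (x + 1)|right; exists x];
    by apply/mapP; exists x.
exists (piM \o rhoi); split; last split.
- move=> x y hx hy xy /=; apply: PM1; try exact: drM.
  by rewrite -(incr_lt_iff _ _ RI) !R2.
- by move=> x hx /=; apply: PM2; apply: drM.
- move=> a b /Eq [x [hx [-> ->]]] /=; rewrite !R1; apply: PM3.
  by apply/mapP; exists x.
Qed.

Lemma incr_inv c ci : cancel c ci -> cancel ci c -> incr c -> incr ci.
Proof. by move=> K1 K2 I x y xy; rewrite -(incr_lt_iff _ _ I) !K2. Qed.

Lemma parity_pos q x : pisom q -> (forall a b, E q a b -> a < b) -> DR q x -> parity q x = 1.
Proof.
move=> H P /DR_iff [[b h]|[a h]].
  by rewrite (parity_dom h); apply: gtr0_sg; rewrite subr_gt0; apply: P.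
by rewrite (parity_rng H h); apply: gtr0_sg; rewrite subr_gt0; apply: P.
Qed.

Definition block_spec c (s : seq (rat * rat)) m1 m2 f sigma (q : qpmap) (pi : rat -> rat) :=
  pisom q /\ (forall a b, (a, b) \in s -> E q a b) /\
    (forall x, DR q x -> m1 < x /\ x < m2) /\
    (forall x y, DR q x -> DR q y -> psim q x y) /\
    (forall x, DR q x -> parity q x = sigma) /\
    (sigma = 1 -> forall a a', DR q a -> DR q a' -> q.[? a] = None -> pinv q a' = None -> a' < a) /\
    (sigma = -1 -> forall a a', DR q a -> DR q a' -> q.[? a'] = None -> pinv q a = None -> a' < a) /\
    (forall x y, DR q x -> DR q y -> x < y -> pi x < pi y) /\
      (forall x, DR q x -> Reg c f (pi x)) /\ (forall a b, E q a b -> pi b = c (pi a)).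

Lemma block c ci (s : seq (rat * rat)) m1 m2 f sigma :
  cancel c ci -> cancel ci c -> incr c ->
  ord_pairs s -> (forall a b, (a, b) \in s -> c a = b) ->
  dr s f -> (forall x, dr s x -> sgc c x = sigma) -> sigma <> 0 ->
  (forall x, dr s x -> m1 < x /\ x < m2) ->
  exists q pi, block_spec c s m1 m2 f sigma q pi.
Proof.
move=> K1 K2 I Hs Hc df Hsg nz Hm.
have sf := Hsg _ df.
case: (sgc_cases c f) => [[_ e]|[[_ e]|[_ e]]]; rewrite e in sf; last by case: nz.
- subst sigma.
  have Hpos : forall a b, (a, b) \in s -> a < b.
    move=> a b h; have : sgc c a = 1 by apply: Hsg; left; exists b.
    rewrite -(Hc _ _ h); case: (sgc_cases c a) => [[? _]|[[_ ->]|[_ ->]]] //.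
  have [q [H1 [H2 [H3 [H4 [H5 [H6 [pi H7]]]]]]]] := block_pos K1 K2 I Hs Hc Hpos df e Hm.
  exists q, pi; split => //; split => //; split => //; split => //; split.
    by move=> x; apply: parity_pos.
  split => //; split => // h; have : (1 : rat) = -1 by []; lra.
- subst sigma.
  pose s' := [seq (xy.2, xy.1) | xy <- s].
  have ms' : forall a b, (a, b) \in s' <-> (b, a) \in s.
    move=> a b; split; first by case/mapP => [[x y] h [-> ->]].
    by move=> h; apply/mapP; exists (b, a).
  have drs' : forall x, dr s' x <-> dr s x.
    move=> x; rewrite /dr; split.
      by case=> [[b /ms' h]|[a /ms' h]]; [right; exists b|left; exists a].
    by case=> [[b h]|[a h]]; [right; exists b|left; exists a]; apply/ms'.
  have Hs' : ord_pairs s'.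
    apply: ord_pairs_strict => a b a' b' /ms' h /ms' h' ab.
    - case: (ltgtP b b') => // hb.
      + by have := proj1 (Hs _ _ _ _ h' h) hb; lra.
      + by subst b'; have := proj2 (Hs _ _ _ _ h' h) erefl; lra.
    - exact: (proj1 (Hs _ _ _ _ h h') ab).
  have Hc' : forall a b, (a, b) \in s' -> ci a = b.
    by move=> a b /ms' h; rewrite -(Hc _ _ h) K1.
  have Hpos : forall a b, (a, b) \in s' -> a < b.
    move=> a b /ms' h; have := Hsg b (or_introl (ex_intro _ a h)).
    case: (sgc_cases c b) => [[_ ->] hh|[[h1 _] _|[_ ->] hh]]; try lra.
    by rewrite -(Hc _ _ h).
  have e' : sgc ci f = 1 by rewrite (sgc_inv _ K1 K2 I) e opprK.
  have Ii := incr_inv K1 K2 I.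
  have Hm' : forall x, dr s' x -> m1 < x /\ x < m2 by move=> x /drs'; apply: Hm.
  have [q [H1 [H2 [H3 [H4 [H5 [H6 [pi [P1 [P2 P3]]]]]]]]]] :=
    block_pos K2 K1 Ii Hs' Hc' Hpos (proj2 (drs' f) df) e' Hm'.
  exists (inv q), pi; split; first exact: inv_pisom.
  split; first by move=> a b h; apply/(invE _ _ H1); apply: H2; apply/ms'.
  split; first by move=> x /(inv_DR _ H1); apply: H3.
  split.
    by move=> x y /(inv_DR _ H1) hx /(inv_DR _ H1) hy; apply/(psim_inv _ _ H1); apply: H4.
  split.
    by move=> x /(inv_DR _ H1) hx; rewrite parity_inv // parity_pos.
  split; first by move=> h; have : (-1 : rat) = 1 by []; lra.
  split.
    move=> _ a a' /(inv_DR _ H1) ha /(inv_DR _ H1) ha'.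
    rewrite inv_fnd // inv_pinv // => n1 n2; exact: H6.
  split; first by move=> x y /(inv_DR _ H1) hx /(inv_DR _ H1) hy; apply: P1.
  split; first by move=> x /(inv_DR _ H1) hx; apply: (Reg_inv K1 K2 I); apply: P2.
  by move=> a b /(invE _ _ H1) h; rewrite (P3 _ _ h) K2.
Qed.

Lemma DR_fmap0 x : ~ DR [fmap] x.
Proof. by move/DR_iff => [[b]|[b]]; rewrite /E fnd_fmap0. Qed.

Lemma E_cat (q1 q2 : qpmap) a b :
  E (catf q1 q2) a b <-> E q2 a b \/ (a \notin domf q2 /\ E q1 a b).
Proof.
rewrite /E fnd_cat; case: ifP => h.
  split; first by left.
  by case=> // [[]].
split; first by move=> e; right.
case=> [e|[_ e]] //.
have : a \in domf q2 by rewrite -fndSome e.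
by rewrite h.
Qed.

Lemma pinv_eq (p p' : qpmap) x : pisom p -> pisom p' -> (forall c, E p' c x <-> E p c x) ->
  pinv p' x = pinv p x.
Proof.
move=> H H' HE; case h: (pinv p x) => [c|].
  by apply/(pinv_iff _ _ H'); apply/HE; apply/(pinv_iff _ _ H).
case h': (pinv p' x) => [c|] //.
by have := pinv_some (proj1 (HE c) (pinvE h')); rewrite h.
Qed.

Lemma cblk_le ws x : (cblk ws x <= size ws)%N.
Proof. exact: count_size. Qed.

Lemma cblk_cat ws w x : cblk (ws ++ [:: w]) x = (cblk ws x + ((w < x)%R : bool))%N.
Proof. by rewrite /cblk count_cat /= addn0. Qed.

Lemma cblk_all ws x : (forall w, w \in ws -> w < x) -> cblk ws x = size ws.
Proof. by move=> H; rewrite /cblk; apply/eqP; rewrite -all_count; apply/allP. Qed.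

Section Main.
Variables (c ci : rat -> rat).
Hypotheses (K1 : cancel c ci) (K2 : cancel ci c) (I : incr c).

Record INV (s : seq (rat * rat)) (U : rat) (q : qpmap) (ws : seq rat) (pi : rat -> rat) : Prop := {
  i_iso : pisom q;
  i_ext : forall a b, (a, b) \in s -> E q a b;
  i_U : forall x, DR q x -> x < U;
  i_cut : forall w, w \in ws -> forall u v, E q u v -> (w < u) = (w < v);
  i_wlt : forall w, w \in ws -> exists x, dr s x /\ w < x;
  i_cl : forall x y, DR q x -> DR q y -> cblk ws x = cblk ws y -> psim q x y;
  i_par : forall x y, DR q x -> DR q y -> cblk ws x = cblk ws y -> parity q x = parity q y;
  i_p : forall a a', DR q a -> DR q a' -> cblk ws a = cblk ws a' -> parity q a = 1 ->
          q.[? a] = None -> pinv q a' = None -> a' <= a;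
  i_n : forall a a', DR q a -> DR q a' -> cblk ws a = cblk ws a' -> parity q a = -1 ->
          q.[? a'] = None -> pinv q a = None -> a' <= a;
  i_nb : forall x y, DR q x -> DR q y -> (cblk ws x < cblk ws y)%N -> parity q x <> 0 ->
          parity q x = parity q y ->
          exists d, DR q d /\ (cblk ws x < cblk ws d)%N /\ (cblk ws d < cblk ws y)%N;
  i_sg : forall x, dr s x -> parity q x = sgc c x;
  i_ord : forall x y, DR q x -> DR q y -> x < y -> pi x < pi y;
  i_eqv : forall a b, E q a b -> pi b = c (pi a);
  i_loc : forall l, dr s l -> (forall x, dr s x -> x <= l) ->
          forall x z, DR q x -> l < z -> (sgc c z <> sgc c l \/ sgc c l = 0) -> pi x < z;
  i_ne : forall x, DR q x -> s <> [::]
}.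

Lemma INV_nil U : INV [::] U [fmap] [::] id.
Proof.
have nD := DR_fmap0.
have nE : forall a b, ~ E [fmap] a b by move=> a b; rewrite /E fnd_fmap0.
split.
- by move=> a b c' d; rewrite fnd_fmap0.
- by move=> a b; rewrite in_nil.
- by move=> x /nD.
- by move=> w; rewrite in_nil.
- by move=> w; rewrite in_nil.
- by move=> x y /nD.
- by move=> x y /nD.
- by move=> x y /nD.
- by move=> x y /nD.
- by move=> x y /nD.
- by move=> x [[b]|[b]].
- by move=> x y /nD.
- by move=> a b /nE.
- by move=> x [[b]|[b]].
- by move=> x /nD.
Qed.


Lemma dr_DR s q x : (forall a b, (a, b) \in s -> E q a b) -> dr s x -> DR q x.
Proof.
move=> H [[b h]|[a h]]; apply/DR_iff; [left; exists b|right; exists a]; exact: H.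
Qed.

Lemma glue s s1 s2 U f sigma w q1 ws1 pi1 q2 pi2 :
  (forall a b, (a, b) \in s -> (a, b) \in s1 \/ (a, b) \in s2) ->
  (forall x, dr s1 x <-> dr s x /\ x < f) ->
  (forall x, dr s2 x -> dr s x /\ f <= x) ->
  dr s f -> sgc c f = sigma ->
  (forall y, dr s y -> f <= y -> sgc c y = sigma) ->
  (sigma = 0 -> forall x, DR q2 x -> pi2 x = f) ->
  (forall l, dr s1 l -> (forall x, dr s1 x -> x <= l) -> sgc c l <> sigma \/ sigma = 0) ->
  w < f -> f < U ->
  INV s1 w q1 ws1 pi1 ->
  block_spec c s2 w U f sigma q2 pi2 ->
  exists q ws pi, INV s U q ws pi.
Proof.
move=> Hs12 Hd1 Hd2 df sf Hsg Hwall Hlc wf fU V1 [B1 [B2 [B3 [B4 [B5 [B6 [B7 [B8 [B9 B10]]]]]]]]].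
have L1 : forall x, DR q1 x -> x < w := i_U V1.
have Iso1 := i_iso V1.
pose q := catf q1 q2.
have dom2 : forall x, x \in domf q2 -> DR q2 x.
  by move=> x hx; left; rewrite -fndSome in hx; move=> e; rewrite e in hx.
have Eq : forall a b, E q a b <-> E q1 a b \/ E q2 a b.
  move=> a b; rewrite E_cat; split.
    by case=> [h|[_ h]]; [right|left].
  case=> h; [right; split => //|by left].
  apply/negP => /dom2 /B3 [h1 _]; have := L1 _ (DR_dom h); lra.
have DRq : forall x, DR q x <-> DR q1 x \/ DR q2 x.
  move=> x; rewrite !DR_iff; split.
    by case=> [[b /Eq [h|h]]|[b /Eq [h|h]]]; [left; left|right; left|left; right|right; right];
      exists b.
  by case=> [[[b h]|[b h]]|[[b h]|[b h]]]; [left|right|left|right]; exists b; apply/Eq; tauto.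
have Iso : pisom q.
  move=> a b a' b' /Eq h /Eq h' ab.
  case: h => h; case: h' => h'.
  - exact: Iso1 h h' ab.
  - have := L1 _ (DR_rng h); have := B3 _ (DR_rng h'); lra.
  - have := B3 _ (DR_dom h); have := L1 _ (DR_dom h'); lra.
  - exact: B1 h h' ab.
have A1 : agree_on q1 q.
  move=> x dx; split.
    rewrite fnd_cat ifF //; apply/negP => /dom2 /B3 [h _]; have := L1 _ dx; lra.
  apply: pinv_eq => // c'; rewrite Eq; split; last by left.
  case=> // h; exfalso; have := B3 _ (DR_rng h); have := L1 _ dx; lra.
have A2 : agree_on q2 q.
  move=> x dx; have [wx xU] := B3 _ dx; split.
    rewrite fnd_cat; case: ifP => // hx.
    rewrite [q2.[? x]]not_fnd; last by rewrite hx.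
    case e: (q1.[? x]) => [b|] //; exfalso; have := L1 _ (DR_dom e); lra.
  apply: pinv_eq => // c'; rewrite Eq; split; last by right.
  case=> // h; exfalso; have := L1 _ (DR_rng h); lra.
pose ws := ws1 ++ [:: w].
have wsw : forall w', w' \in ws1 -> w' < w.
  move=> w' /(i_wlt V1) [x [dx h]]; have := L1 _ (dr_DR (i_ext V1) dx); lra.
have blk1 : forall x, DR q1 x -> cblk ws x = cblk ws1 x.
  by move=> x dx; rewrite cblk_cat ltNge ltW ?addn0 //; apply: L1.
have blk2 : forall x, DR q2 x -> cblk ws x = (size ws1).+1.
  move=> x dx; have [wx _] := B3 _ dx.
  rewrite cblk_cat wx addn1 cblk_all // => w' /wsw; lra.
have blk12 : forall x y, DR q1 x -> DR q2 y -> (cblk ws x < cblk ws y)%N.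
  by move=> x y dx dy; rewrite blk1 // blk2 // ltnS cblk_le.
have sne : s <> [::] by move=> e; move: df; rewrite e => [[[b]|[b]]].
have Lmax : forall x, DR q1 x -> exists l, dr s1 l /\ forall y, dr s1 y -> y <= l.
  move=> x dx; have ne1 := i_ne V1 dx.
  have ne : drs s1 <> [::].
    by case: (s1) ne1 => [//|[a b] s1'] _; rewrite /drs.
  have [l [hl Hl]] := @seq_max _ _ id ne.
  by exists l; split; [apply/drsP|move=> y /drsP /Hl].
pose pi := fun x => if x < w then pi1 x else pi2 x.
have pi1E : forall x, DR q1 x -> pi x = pi1 x by move=> x /L1 h; rewrite /pi h.
have pi2E : forall x, DR q2 x -> pi x = pi2 x.
  by move=> x /B3 [h _]; rewrite /pi ltNge ltW.
have loc12 : forall x y, DR q1 x -> DR q2 y -> pi1 x < pi2 y.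
  move=> x y dx dy; have [l [dl Hlm]] := Lmax _ dx.
  have [dls ls] := proj1 (Hd1 l) dl.
  apply: (i_loc V1 dl Hlm dx).
  - case: (eqVneq sigma 0) => [s0|sn0].
      by rewrite (Hwall s0 _ dy).
    rewrite ltNge; apply/negP => hz.
    have : sgc c l = sgc c f by apply: (B9 _ dy); rewrite betwP; lra.
    rewrite sf; case: (Hlc _ dl Hlm) => [h|e]; first by move/h.
    by rewrite e eqxx in sn0.
  - case: (eqVneq sigma 0) => [s0|sn0].
      rewrite (Hwall s0 _ dy) sf s0.
      by case: (eqVneq (sgc c l) 0) => h; [right|left; apply/nesym/eqP].
    left; rewrite (Reg_sg (B9 _ dy)) sf.
    case: (Hlc _ dl Hlm) => [h|e]; first by apply/nesym.
    by rewrite e eqxx in sn0.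
have fle : forall l, dr s l -> (forall x, dr s x -> x <= l) -> f <= l.
  by move=> l _ H; apply: H.
exists q, ws, pi; split.
- exact: Iso.
- move=> a b /Hs12 [h|h]; apply/Eq; [left; exact: (i_ext V1 h)|right; exact: B2 h].
- move=> x /DRq [h|h]; [have := L1 _ h; lra|exact: (B3 _ h).2].
- move=> w'; rewrite mem_cat => /orP [hw|]; last rewrite inE => /eqP ->.
    move=> u v /Eq [h|h]; first exact: (i_cut V1 hw h).
    have [h1 _] := B3 _ (DR_dom h); have [h2 _] := B3 _ (DR_rng h); have := wsw _ hw => h3.
    have e1 : w' < u by lra.
    have e2 : w' < v by lra.
    by rewrite e1 e2.
  move=> u v /Eq [h|h].
    have := L1 _ (DR_dom h); have := L1 _ (DR_rng h) => h1 h2.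
    have e1 : (w < u) = false by apply/negbTE; rewrite -leNgt; lra.
    have e2 : (w < v) = false by apply/negbTE; rewrite -leNgt; lra.
    by rewrite e1 e2.
  have [h1 _] := B3 _ (DR_dom h); have [h2 _] := B3 _ (DR_rng h).
  by rewrite h1 h2.
- move=> w'; rewrite mem_cat => /orP [hw|]; last first.
    by rewrite inE => /eqP ->; exists f.
  have [x [dx h]] := i_wlt V1 hw; exists x; split => //; exact: (proj1 (Hd1 x) dx).1.
- move=> x y /DRq [hx|hx] /DRq [hy|hy] e.
  + rewrite !blk1 // in e; apply: psim_mono A1 _; exact: (i_cl V1 hx hy e).
  + by have := blk12 _ _ hx hy; rewrite e ltnn.
  + by have := blk12 _ _ hy hx; rewrite e ltnn.
  + apply: psim_mono A2 _; exact: B4.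
- move=> x y /DRq [hx|hx] /DRq [hy|hy] e.
  + rewrite !blk1 // in e; rewrite (agree_par A1 hx) (agree_par A1 hy).
    exact: (i_par V1 hx hy e).
  + by have := blk12 _ _ hx hy; rewrite e ltnn.
  + by have := blk12 _ _ hy hx; rewrite e ltnn.
  + by rewrite (agree_par A2 hx) (agree_par A2 hy) !B5.
- move=> a a' /DRq [ha|ha] /DRq [ha'|ha'] e p1 n1 n2.
  + rewrite !blk1 // in e; rewrite (agree_par A1 ha) in p1.
    rewrite (A1 _ ha).1 in n1; rewrite (A1 _ ha').2 in n2.
    exact: (i_p V1 ha ha' e p1 n1 n2).
  + by have := blk12 _ _ ha ha'; rewrite e ltnn.
  + by have := blk12 _ _ ha' ha; rewrite e ltnn.
  + rewrite (agree_par A2 ha) B5 // in p1.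
    rewrite (A2 _ ha).1 in n1; rewrite (A2 _ ha').2 in n2.
    by apply: ltW; apply: B6.
- move=> a a' /DRq [ha|ha] /DRq [ha'|ha'] e p1 n1 n2.
  + rewrite !blk1 // in e; rewrite (agree_par A1 ha) in p1.
    rewrite (A1 _ ha').1 in n1; rewrite (A1 _ ha).2 in n2.
    exact: (i_n V1 ha ha' e p1 n1 n2).
  + by have := blk12 _ _ ha ha'; rewrite e ltnn.
  + by have := blk12 _ _ ha' ha; rewrite e ltnn.
  + rewrite (agree_par A2 ha) B5 // in p1.
    rewrite (A2 _ ha').1 in n1; rewrite (A2 _ ha).2 in n2.
    by apply: ltW; apply: B7.
- move=> x y /DRq [hx|hx] /DRq [hy|hy] lt nz ep.
  + rewrite !blk1 // in lt *; rewrite (agree_par A1 hx) (agree_par A1 hy) in nz ep.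
    have [d [dd [l1 l2]]] := i_nb V1 hx hy lt nz ep.
    exists d; rewrite blk1 //; split => //; apply/DRq; by left.
  + rewrite (agree_par A2 hy) B5 // in ep; rewrite (agree_par A1 hx) in nz ep.
    have [l [dl Hlm]] := Lmax _ hx.
    have Dl : DR q1 l := dr_DR (i_ext V1) dl.
    have pl : parity q1 l = sgc c l.
      by apply: (i_sg V1).
    have sl : sgc c l <> sigma.
      case: (Hlc _ dl Hlm) => // e; by rewrite ep e in nz.
    have bl : cblk ws1 l = size ws1.
      apply: cblk_all => w' /(i_wlt V1) [x' [dx' h]]; have := Hlm _ dx'; lra.
    have bx : (cblk ws1 x < size ws1)%N.
      rewrite ltn_neqAle cblk_le andbT; apply/eqP => e.
      have := (i_par V1 hx Dl); rewrite e bl pl ep => /(_ erefl) /esym.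
      exact: sl.
    exists l; split; first by apply/DRq; left.
    by rewrite (blk1 _ hx) (blk1 _ Dl) (blk2 _ hy) bl.
  + by have h2 := blk12 _ _ hy hx; move: (ltn_trans h2 lt); rewrite ltnn.
  + by move: lt; rewrite !blk2 // ltnn.
- move=> x dx.
  have : dr s1 x \/ dr s2 x.
    case: dx => [[b h]|[a h]]; (case: (Hs12 _ _ h) => h'; [left|right]);
      by [left; exists b|right; exists a].
  case=> [d1|d2].
    have Dx := dr_DR (i_ext V1) d1.
    by rewrite (agree_par A1 Dx); apply: (i_sg V1).
  have Dx := dr_DR B2 d2.
  have [dsx fx] := Hd2 _ d2.
  by rewrite (agree_par A2 Dx) B5 // Hsg.
- move=> x y /DRq [hx|hx] /DRq [hy|hy] xy.
  + rewrite !pi1E //; exact: (i_ord V1 hx hy xy).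
  + rewrite pi1E // pi2E //; exact: loc12.
  + exfalso; have := L1 _ hy; have := B3 _ hx; lra.
  + rewrite !pi2E //; exact: B8.
- move=> a b /Eq [h|h].
    rewrite !pi1E; [exact: (i_eqv V1 h)|exact: DR_dom h|exact: DR_rng h].
  rewrite !pi2E; [exact: B10 h|exact: DR_dom h|exact: DR_rng h].
- move=> l dl Hlm x z /DRq [hx|hx] lz hz; last first.
    have fl := fle _ dl Hlm.
    have sl : sgc c l = sigma by apply: Hsg.
    rewrite pi2E //.
    case: (eqVneq sigma 0) => [s0|sn0].
      rewrite (Hwall s0 _ hx); lra.
    have hz' : sgc c z <> sigma by case: hz; rewrite sl // => e; rewrite e eqxx in sn0.
    rewrite ltNge; apply/negP => hzp.
    apply: hz'; rewrite -sf; apply: (B9 _ hx); rewrite betwP; lra.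
  have fl := fle _ dl Hlm.
  rewrite pi1E //.
  have [l1 [dl1 Hlm1]] := Lmax _ hx.
  have [_ l1f] := proj1 (Hd1 l1) dl1.
  case: (classic (sgc c z <> sgc c l1 \/ sgc c l1 = 0)) => hz1.
    by apply: (i_loc V1 dl1 Hlm1 hx) => //; lra.
  have pf : pi1 x < f.
    apply: (i_loc V1 dl1 Hlm1 hx) => //; left; rewrite sf.
    case: (Hlc _ dl1 Hlm1) => [h|e]; first by apply/nesym.
    move=> e2; apply: hz1; right; by rewrite -e2 e.
  lra.
- by move=> x _.
Qed.


End Main.

Section Main2.
Variables (c ci : rat -> rat).
Hypotheses (K1 : cancel c ci) (K2 : cancel ci c) (I : incr c).

Lemma wall_spec (s : seq (rat * rat)) w U f :
  sgc c f = 0 -> (forall a b, (a, b) \in s -> a = f /\ b = f) -> w < f -> f < U ->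
  block_spec c s w U f 0 ([fmap].[f <- f]) id.
Proof.
move=> sf Hs wf fU.
have cf : c f = f.
  case: (sgc_cases c f) => [[_ e]|[[_ e]|[e _]]] //; exfalso; rewrite sf in e; lra.
pose q := [fmap].[f <- f] : qpmap.
have Eq : forall a b, E q a b <-> a = f /\ b = f.
  move=> a b; rewrite /E fnd_set fnd_fmap0; case: eqP => [->|nf].
    by split => [[->]|[_ ->]].
  by split => [//|[e _]].
have DRq : forall x, DR q x -> x = f.
  by move=> x /DR_iff [[b /Eq [-> _]]|[b /Eq [_ ->]]].
split.
  by move=> a b a' b' /Eq [-> _] /Eq [-> _]; rewrite ltxx.
split; first by move=> a b /Hs [-> ->]; apply/Eq.
split; first by move=> x /DRq ->.
split; first by move=> x y /DRq -> /DRq ->; apply: psim_refl.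
split.
  move=> x /DRq ->; have -> : parity q f = Num.sg (f - f) by apply: parity_dom; apply/Eq.
  by rewrite subrr sgr0.
split; first by move=> h; have : (0 : rat) = 1 by []; lra.
split; first by move=> h; have : (0 : rat) = -1 by []; lra.
split; first by move=> x y /DRq -> /DRq ->; rewrite ltxx.
split; first by move=> x /DRq ->; apply: Reg_refl.
by move=> a b /Eq [-> ->] /=.
Qed.

Lemma main_ind (s : seq (rat * rat)) : ord_pairs s -> (forall a b, (a, b) \in s -> c a = b) ->
  forall U, (forall x, dr s x -> x < U) -> exists q ws pi, INV c s U q ws pi.
Proof.
have [n] := ubnP (size s); elim: n s => // n IH s hsn Hs Hc U HU.
have [->|sne] := eqVneq s [::]; first by exists [fmap], [::], id; apply: INV_nil.
pose D := drs s.
have DP : forall x, x \in D <-> dr s x by move=> x; apply: drsP.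
have Dne : D <> [::].
  rewrite /D /drs; case: (s) sne => [//|[a b] s'] _ //=.
have [t [ht Ht]] := @seq_max _ D id Dne; simpl in Ht.
pose sigma := sgc c t.
pose P := fun x => all (fun y => (x <= y) ==> ((sgc c y == sigma) && ((sigma == 0) ==> (y == x)))) D.
pose F := [seq x <- D | P x].
have tF : t \in F.
  rewrite mem_filter ht andbT; apply/allP => y hy; apply/implyP => ty.
  have e : y = t by have := Ht _ hy; lra.
  rewrite e; apply/andP; split; first by apply/eqP.
  by apply/implyP => _; apply/eqP.
have Fne : F <> [::] by move=> e; rewrite e in tF.
have [f [hf Hf]] := @seq_min _ F id Fne; simpl in Hf.
move: hf; rewrite mem_filter => /andP [Pf fD].
have df : dr s f by apply/DP.
have Hsg : forall y, dr s y -> f <= y -> sgc c y = sigma.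
  move=> y /DP hy fy; move/allP: Pf => /(_ _ hy); rewrite fy /= => /andP [/eqP -> _] //.
have Hz : sigma = 0 -> forall y, dr s y -> f <= y -> y = f.
  move=> s0 y /DP hy fy; move/allP: Pf => /(_ _ hy); rewrite fy s0 eqxx /= => /andP [_ /eqP] //.
have sf : sgc c f = sigma by apply: Hsg; rewrite ?lexx.
have fU : f < U by apply: HU.
have NoGap : forall l, dr s l -> l < f -> (forall x, dr s x -> x < f -> x <= l) ->
    sgc c l <> sigma \/ sigma = 0.
  move=> l dl lf Hl; case: (eqVneq sigma 0) => [->|sn0]; first by right.
  left => sl.
  have Pl : P l.
    apply/allP => y hy; apply/implyP => ly.
    have sy : sgc c y = sigma.
      case: (ltP y f) => yf; last by apply: Hsg => //; apply/DP.
      have := Hl _ (proj1 (DP y) hy) yf => yl.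
      by have -> : y = l by lra.
    by rewrite sy eqxx /= (negPf sn0).
  have : f <= l by apply: Hf; rewrite mem_filter Pl; apply/DP.
  lra.
have sgc_pair : forall a b, (a, b) \in s -> sgc c b = sgc c a.
  by move=> a b h; rewrite -(Hc _ _ h) sgc_c.
have fix0 : forall a b, (a, b) \in s -> sgc c a = 0 -> a = b.
  move=> a b h; rewrite -(Hc _ _ h).
  case: (sgc_cases c a) => [[_ e1] e2|[[_ e1] e2|[e _] _]].
  - by move: e2; rewrite e1 => /eqP; rewrite oner_eq0.
  - by move: e2; rewrite e1 => /eqP; rewrite oppr_eq0 oner_eq0.
  - by rewrite e.
have Lmax : forall x, dr s x -> x < f ->
    exists l, dr s l /\ l < f /\ forall y, dr s y -> y < f -> y <= l.
  move=> x dx xf.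
  have ne : [seq y <- D | y < f] <> [::].
    move=> e; have : x \in [seq y <- D | y < f] by rewrite mem_filter xf; apply/DP.
    by rewrite e.
  have [l [hl Hl]] := @seq_max _ _ id ne.
  move: hl; rewrite mem_filter => /andP [lf /DP dl].
  exists l; split => //; split => // y dy yf; apply: Hl; rewrite mem_filter yf; exact/DP.
have NoCross : forall a b, (a, b) \in s -> (f <= a) = (f <= b).
  move=> a b h.
  have da : dr s a by left; exists b.
  have db : dr s b by right; exists a.
  have cab := Hc _ _ h.
  case: (leP f a) => fa; case: (leP f b) => fb //.
  - (* b < f <= a *)
    exfalso; have sa := Hsg _ da fa.
    case: (eqVneq sigma 0) => [s0|sn0].
      have e := fix0 _ _ h (etrans sa s0); by move: fb; rewrite -e ltNge fa.
    have [l [dl [lf Hl]]] := Lmax _ db fb.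
    have bl := Hl _ db fb.
    have : sgc c l = sgc c a.
      by apply: (between_sign I); rewrite cab betwP; lra.
    rewrite sa; case: (NoGap _ dl lf Hl) => // e; by rewrite e eqxx in sn0.
  - (* a < f <= b *)
    exfalso; have sb := Hsg _ db fb.
    have sa : sgc c a = sigma by rewrite -(sgc_pair _ _ h).
    case: (eqVneq sigma 0) => [s0|sn0].
      have e := fix0 _ _ h (etrans sa s0); by move: fa; rewrite e ltNge fb.
    have [l [dl [lf Hl]]] := Lmax _ da fa.
    have al := Hl _ da fa.
    have : sgc c l = sgc c a.
      by apply: (between_sign I); rewrite cab betwP; lra.
    rewrite sa; case: (NoGap _ dl lf Hl) => // e; by rewrite e eqxx in sn0.
pose s1 := [seq xy <- s | xy.1 < f].
pose s2 := [seq xy <- s | f <= xy.1].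
have m1 : forall a b, (a, b) \in s1 <-> (a, b) \in s /\ a < f.
  by move=> a b; rewrite mem_filter /= andbC; split => [/andP|[-> ->]].
have m2 : forall a b, (a, b) \in s2 <-> (a, b) \in s /\ f <= a.
  by move=> a b; rewrite mem_filter /= andbC; split => [/andP|[-> ->]].
have Hs12 : forall a b, (a, b) \in s -> (a, b) \in s1 \/ (a, b) \in s2.
  move=> a b h; case: (ltP a f) => af; [left; apply/m1|right; apply/m2]; by split.
have Hd1 : forall x, dr s1 x <-> dr s x /\ x < f.
  move=> x; split.
    case=> [[b /m1 [h xf]]|[a /m1 [h af]]]; split; try by [left; exists b|right; exists a|].
    by have := NoCross _ _ h; rewrite (leNgt f a) af /= => /esym /negbT; rewrite -ltNge.
  move=> [[[b h]|[a h]] xf]; [left; exists b|right; exists a]; apply/m1; split => //.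
  by have := NoCross _ _ h; rewrite (leNgt f x) xf /= => /negbT; rewrite -ltNge.
have Hd2 : forall x, dr s2 x <-> dr s x /\ f <= x.
  move=> x; split.
    case=> [[b /m2 [h xf]]|[a /m2 [h af]]]; split; try by [left; exists b|right; exists a|].
    by rewrite -(NoCross _ _ h).
  move=> [[[b h]|[a h]] xf]; [left; exists b|right; exists a]; apply/m2; split => //.
  by rewrite (NoCross _ _ h).
have hs1n : (size s1 < n)%N.
  rewrite -ltnS; apply: leq_trans hsn; rewrite ltnS /s1 size_filter.
  rewrite -(count_predC (fun xy : rat * rat => xy.1 < f) s).
  rewrite -[X in (X < _)%N]addn0 ltn_add2l -has_count.
  have [[b h]|[a h]] := proj1 (DP t) ht.
    apply/hasP; exists (t, b) => //=; rewrite -leNgt; apply: Hf; done.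
  apply/hasP; exists (a, t) => //=; rewrite -leNgt (NoCross _ _ h); apply: Hf; done.
have sub1 : forall a b, (a, b) \in s1 -> (a, b) \in s by move=> a b /m1 [].
have sub2 : forall a b, (a, b) \in s2 -> (a, b) \in s by move=> a b /m2 [].
have Hs1 : ord_pairs s1 by move=> a b a' b' /sub1 h /sub1 h'; apply: Hs.
have Hs2 : ord_pairs s2 by move=> a b a' b' /sub2 h /sub2 h'; apply: Hs.
have [w [wf Hw]] : exists w, w < f /\ forall x, dr s x -> x < f -> x < w.
  case: (classic (exists x, dr s x /\ x < f)) => [[x [dx xf]]|nx].
    have [l [dl [lf Hl]]] := Lmax _ dx xf.
    exists ((l + f) / 2); split; first lra.
    by move=> y dy yf; have := Hl _ dy yf; lra.
  exists (f - 1); split; first lra.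
  by move=> y dy yf; case: nx; exists y.
have [q1 [ws1 [pi1 V1]]] := IH s1 hs1n Hs1 (fun a b h => Hc _ _ (sub1 _ _ h)) w
  (fun x dx => Hw _ (proj1 (Hd1 x) dx).1 (proj1 (Hd1 x) dx).2).
have Hlc : forall l, dr s1 l -> (forall x, dr s1 x -> x <= l) -> sgc c l <> sigma \/ sigma = 0.
  move=> l /Hd1 [dl lf] Hl; apply: NoGap => // x dx xf; apply: Hl; exact/Hd1.
have Hbnd : forall x, dr s2 x -> w < x /\ x < U.
  by move=> x /Hd2 [dx fx]; split; [lra|apply: HU].
case: (eqVneq sigma 0) => [s0|sn0].
- have Hw0 : forall a b, (a, b) \in s2 -> a = f /\ b = f.
    move=> a b h; have [hs fa] := proj1 (m2 a b) h.
    have fb : f <= b by rewrite -(NoCross _ _ hs).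
    by split; apply: (Hz s0) => //; [left; exists b|right; exists a].
  rewrite s0 in sf Hsg Hlc.
  have Bs := wall_spec sf Hw0 wf fU.
  apply: (glue Hs12 Hd1 (fun x h => proj1 (Hd2 x) h) df sf Hsg _ Hlc wf fU V1 Bs).
  move=> _ x /DR_iff [[b]|[b]]; rewrite /E fnd_set fnd_fmap0; case: eqP => // eb;
    by [rewrite eb|case=> <-].
- have df2 : dr s2 f by apply/Hd2; rewrite lexx.
  have Hsg2 : forall x, dr s2 x -> sgc c x = sigma by move=> x /Hd2 [dx fx]; apply: Hsg.
  have [q2 [pi2 Bs]] := block K1 K2 I Hs2 (fun a b h => Hc _ _ (sub2 _ _ h)) df2 Hsg2
    ltac:(by apply/eqP) Hbnd.
  apply: (glue Hs12 Hd1 (fun x h => proj1 (Hd2 x) h) df sf Hsg _ Hlc wf fU V1 Bs).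
  by move=> s0; rewrite s0 eqxx in sn0.
Qed.

End Main2.

Lemma INV_good c s U q ws pi : INV c s U q ws pi -> good q.
Proof.
move=> V; apply: (@good_crit q (cblk ws)).
- exact: (i_iso V).
- by move=> x y; apply: cblk_mono.
- by apply: cblk_psim => w hw u v h; apply: (i_cut V hw h).
- by move=> x y hx hy e; apply: (i_cl V hx hy e).
- by move=> a a' ha ha' e p1 n1 n2; apply: (i_p V ha ha' e p1 n1 n2).
- by move=> a a' ha ha' e p1 n1 n2; apply: (i_n V ha ha' e p1 n1 n2).
- by move=> x y hx hy lt nz ep; apply: (i_nb V hx hy lt nz ep).
Qed.

Lemma pairs_ord p : pisom p -> ord_pairs (pairs p).
Proof.
move=> H a b a' b' /pairsP h /pairsP h'; split; first exact: H h h'.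
by move=> e; subst a'; apply: E_fun h h'.
Qed.

Lemma core c ci (p : qpmap) : cancel c ci -> cancel ci c -> incr c -> pisom p ->
  (forall a b, E p a b -> c a = b) ->
  exists q, good q /\ extends q p /\ exists pi,
    (forall x y, DR q x -> DR q y -> x < y -> pi x < pi y) /\ (forall a b, E q a b -> pi b = c (pi a)).
Proof.
move=> K1 K2 I H Hc.
have Hs := pairs_ord H.
have Hc' : forall a b, (a, b) \in pairs p -> c a = b by move=> a b /pairsP; apply: Hc.
have [U HU] : exists U, forall x, dr (pairs p) x -> x < U.
  have [e|ne] := eqVneq (drs (pairs p)) [::].
    by exists 0 => x /drsP; rewrite e.
  have [m [_ Hm]] := @seq_max _ _ id (ltac:(by apply/eqP) : drs (pairs p) <> [::]).
  by exists (m + 1) => x /drsP /Hm /= h; lra.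
have [q [ws [pi V]]] := main_ind K1 K2 I Hs Hc' HU.
exists q; split; first exact: INV_good V.
split; first by move=> a b h; apply: (i_ext V); apply/pairsP.
by exists pi; split; [move=> x y hx hy xy; apply: (i_ord V hx hy xy)|move=> a b h; apply: (i_eqv V h)].
Qed.

Lemma aut_of (g : rat -> rat) : is_aut g -> exists gi, cancel g gi /\ cancel gi g /\ incr g.
Proof. by case=> [[gi K1 K2] I]; exists gi. Qed.

Lemma realize_aut c (q : qpmap) pi :
  (forall x y, DR q x -> DR q y -> x < y -> pi x < pi y) -> (forall a b, E q a b -> pi b = c (pi a)) ->
  exists rho rhoi, cancel rho rhoi /\ cancel rhoi rho /\ incr rho /\
    forall a b, E q a b -> rho (c (rhoi a)) = b.
Proof.
move=> P1 P2.
pose T := [seq (pi x, x) | x <- drs (pairs q)].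
have memT : forall a b, (a, b) \in T -> DR q b /\ a = pi b.
  move=> a b /mapP [x /drsP dx [-> ->]]; split => //.
  case: dx => [[y /pairsP h]|[y /pairsP h]]; apply/DR_iff; [left|right]; by exists y.
have HT : ord_pairs T.
  apply: ord_pairs_strict => a b a' b' /memT [h1 ->] /memT [h2 ->] ab.
  - rewrite ltNge; apply/negP; rewrite le_eqVlt => /orP [/eqP e|h].
      by move: ab; rewrite e ltxx.
    by have := P1 _ _ h2 h1 h; lra.
  - exact: P1.
have [rho [rhoi [R1 [R2 [RI RE]]]]] := extend_aut HT.
have Rpi : forall x, DR q x -> rho (pi x) = x.
  move=> x dx; apply: RE; apply/mapP; exists x => //; apply/drsP.
  case/DR_iff: dx => [[y h]|[y h]]; [left|right]; exists y; exact/pairsP.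
exists rho, rhoi; split => //; split => //; split => // a b h.
have ea : rhoi a = pi a by rewrite -{1}(Rpi a (DR_dom h)) R1.
by rewrite ea -(P2 _ _ h) Rpi //; apply: DR_rng h.
Qed.

Lemma incr_comp f g : incr f -> incr g -> incr (f \o g).
Proof. by move=> If Ig x y xy; apply: If; apply: Ig. Qed.

Theorem lemma4p3 :
  (forall p : qpmap, pisom p -> exists q, good q /\ extends q p)
  /\
  (forall gamma : rat -> rat, is_aut gamma ->
     forall p : qpmap, in_Pgamma gamma p ->
       exists q, good q /\ in_Pgamma gamma q /\ extends q p).
Proof.
split.
  move=> p H.
  have [c [ci [K1 [K2 [I Ext]]]]] := extend_aut (pairs_ord H).
  have [q [G [X _]]] := core K1 K2 I H (fun a b h => Ext _ _ (proj2 (pairsP _ _ _) h)).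
  by exists q.
move=> gamma Ag p [H [h [[Ah Hcl] Hph]]].
have [gi [G1 [G2 Ig]]] := aut_of Ag.
have [sigma [tau [As [S1 [S2 Hst]]]]] := Hcl [seq xy.1 | xy <- pairs p].
have [si [_ [_ Is]]] := aut_of As.
have It : incr tau := incr_inv S1 S2 Is.
pose c := sigma \o gamma \o tau.
pose ci := sigma \o gi \o tau.
have K1 : cancel c ci by move=> x; rewrite /c /ci /= S1 G1 S2.
have K2 : cancel ci c by move=> x; rewrite /c /ci /= S1 G2 S2.
have I : incr c by apply: incr_comp => //; apply: incr_comp.
have Hc : forall a b, E p a b -> c a = b.
  move=> a b hab; rewrite /c /= Hst; first exact: Hph.
  by apply/mapP; exists (a, b) => //; apply/pairsP.
have [q [Gq [X [pi [P1 P2]]]]] := core K1 K2 I H Hc.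
have [rho [rhoi [R1 [R2 [RI RE]]]]] := realize_aut P1 P2.
exists q; split => //; split => //.
split; first by case: Gq.
exists (rho \o c \o rhoi); split; last by move=> a b hab; apply: RE.
split.
  split; first by exists (rho \o ci \o rhoi) => x /=; rewrite ?R1 ?K1 ?K2 ?R2 ?R1.
  by move=> x y xy; apply: (RI); apply: I; apply: (incr_inv R1 R2 RI).
move=> F; exists (rho \o sigma), (tau \o rhoi); split.
  split; first by exists (tau \o rhoi) => x /=; rewrite ?S1 ?R1 ?R2 ?S2.
  by move=> x y xy; apply: (RI); apply: Is.
split; first by move=> x /=; rewrite R1 S1.
split; first by move=> x /=; rewrite S2 R2.
by move=> x _.
Qed.
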